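(* The collection $\{\Delta_C : C \text{ a strongly connected component of } G\}$ is a finest Morse decomposition of $(\Delta,\psi)$: no Morse decomposition of $(\Delta,\psi)$ is finer than it.
   Context: $G$ is a finite directed graph (loops allowed) with vertex set $V$. $\Omega$ is the set of bi-infinite paths in $G$, i.e. sequences $(x_i)_{i\in\mathbb Z}\in V^{\mathbb Z}$ such that for every $i$ there is an edge from $x_i$ to $x_{i+1}$. Fix $h>0$. $\bar\Delta$ is the set of functions $x:\mathbb R\to V$ that are constant on each interval $[nh,(n+1)h)$, $n\in\mathbb Z$, and satisfy $(x(ih))_{i\in\mathbb Z}\in\Omega$. $\Delta=\{x(\cdot+t): x\in\bar\Delta,\ t\in\mathbb R\}$, with metric $d(x,y)=\sum_{i\in\mathbb Z}4^{-|i|}\frac1h\int_{ih}^{(i+1)h}\delta(x,y,t)\,dt$, where $\delta(x,y,t)=1$ if $x(t)\ne y(t)$ and $0$ otherwise. The flow $\psi:\mathbb R\times\Delta\to\Delta$ is $\psi(t,x)=x(\cdot+t)$. A strongly connected component of $G$ is a maximal nonempty set $C\subseteq V$ such that for all $u,v\in C$ (including $u=v$) there is a directed path of positive length from $u$ to $v$ with all vertices in $C$. The lift of $C$ is $\Delta_C=\{f\in\Delta: f(t)\in C \text{ for all } t\in\mathbb R\}$. For $x\in\Delta$, $\omega(x)$ (resp. $\alpha(x)$) is the set of limits of $\psi(t_k,x)$ along sequences $t_k\to+\infty$ (resp. $t_k\to-\infty$). A set $K$ is invariant if $\psi(t,K)\subseteq K$ for all $t\in\mathbb R$; isolated if there is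 a neighborhood $N$ of $K$ with $K\subset\operatorname{int}N$ such that $\psi(t,x)\in N$ for all $t\in\mathbb R$ implies $x\in K$. A Morse decomposition is a finite collection $\{\mathcal M_1,\dots,\mathcal M_n\}$ of non-void, pairwise disjoint, invariant, isolated, compact sets such that (1) $\omega(x),\alpha(x)\subseteq\bigcup_i\mathcal M_i$ for every $x$, and (2) (no cycles) if there are Morse sets $\mathcal M_{j_0},\dots,\mathcal M_{j_l}$ and points $x_1,\dots,x_l\notin\bigcup_i\mathcal M_i$ with $\alpha(x_m)\subseteq\mathcal M_{j_{m-1}}$ and $\omega(x_m)\subseteq\mathcal M_{j_m}$ for $m=1,\dots,l$, then $\mathcal M_{j_0}\ne\mathcal M_{j_l}$. A Morse decomposition $\{\mathcal M_1,\dots,\mathcal M_n\}$ is finer than $\{\mathcal M'_1,\dots,\mathcal M'_l\}$ if for every $j$ there is $i$ with $\mathcal M_i\subseteq\mathcal M'_j$, with proper containment for at least one $j$. *)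

(* Defs.v *)
From Stdlib Require Import Reals Lra ZArith List Classical ClassicalEpsilon.
Open Scope R_scope.

Section Defs.
Variables (V : Type) (E : V -> V -> Prop) (h : R).

Definition finite_type : Prop := exists l : list V, forall v : V, In v l.

Inductive pathIn (C : V -> Prop) : V -> V -> Prop :=
| pathIn_edge : forall u v, C u -> C v -> E u v -> pathIn C u v
| pathIn_step : forall u w v, C u -> E u w -> pathIn C w v -> pathIn C u v.

Definition strongly_conn (C : V -> Prop) : Prop :=
  forall u v, C u -> C v -> pathIn C u v.

Definition isSCC (C : V -> Prop) : Prop :=
  (exists v, C v) /\ strongly_conn C /\
  (forall C' : V -> Prop, (forall v, C v -> C' v) -> strongly_conn C' ->
     forall v, C' v -> C v).

Definition InDeltaBar (x : R -> V) : Prop :=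
  (forall (n : Z) (s : R), IZR n * h <= s < (IZR n + 1) * h -> x s = x (IZR n * h)) /\
  (forall i : Z, E (x (IZR i * h)) (x (IZR (i + 1) * h))).

Definition InDelta (x : R -> V) : Prop :=
  exists xb t, InDeltaBar xb /\ forall s, x s = xb (s + t).

Definition psi (t : R) (x : R -> V) : R -> V := fun s => x (s + t).

Definition delta (x y : R -> V) (t : R) : R :=
  if excluded_middle_informative (x t = y t) then 0 else 1.

Definition RInt (f : R -> R) (a b : R) : R :=
  epsilon (inhabits 0) (fun v => exists pr : Riemann_integrable f a b, RiemannInt pr = v).

Definition dterm (x y : R -> V) (i : Z) : R :=
  (/ 4) ^ (Z.abs_nat i) * (/ h * RInt (delta x y) (IZR i * h) ((IZR i + 1) * h)).

(* sum over i in Z, grouped as i = 0 and then (n, -n) *)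
Definition dseries (x y : R -> V) (n : nat) : R :=
  match n with
  | O => dterm x y 0
  | S _ => dterm x y (Z.of_nat n) + dterm x y (- Z.of_nat n)
  end.

Definition dist (x y : R -> V) : R :=
  epsilon (inhabits 0) (fun r => infinite_sum (dseries x y) r).

Definition set := (R -> V) -> Prop.

Definition seq_conv (a : nat -> R -> V) (y : R -> V) : Prop :=
  forall eps, 0 < eps -> exists N, forall k, (N <= k)%nat -> dist (a k) y < eps.

Definition is_open (U : set) : Prop :=
  (forall x, U x -> InDelta x) /\
  forall x, U x -> exists eps, 0 < eps /\
    forall y, InDelta y -> dist x y < eps -> U y.

Definition interior (N : set) (x : R -> V) : Prop :=
  InDelta x /\ exists eps, 0 < eps /\ forall y, InDelta y -> dist x y < eps -> N y.

Definition compact (K : set) : Prop :=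
  forall (I : Type) (U : I -> set), (forall i, is_open (U i)) ->
    (forall x, K x -> exists i, U i x) ->
    exists l : list I, forall x, K x -> exists i, In i l /\ U i x.

Definition omega_lim (x : R -> V) (y : R -> V) : Prop :=
  InDelta y /\ exists t : nat -> R,
    (forall M, exists N, forall k, (N <= k)%nat -> M < t k) /\
    seq_conv (fun k => psi (t k) x) y.

Definition alpha_lim (x : R -> V) (y : R -> V) : Prop :=
  InDelta y /\ exists t : nat -> R,
    (forall M, exists N, forall k, (N <= k)%nat -> t k < M) /\
    seq_conv (fun k => psi (t k) x) y.

Definition invariant (K : set) : Prop :=
  forall t x, K x -> K (psi t x).

Definition isolated (K : set) : Prop :=
  exists N : set, (forall x, N x -> InDelta x) /\
    (forall x, K x -> interior N x) /\
    (forall x, InDelta x -> (forall t, N (psi t x)) -> K x).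

Definition subset (A B : set) : Prop := forall x, A x -> B x.
Definition set_eq (A B : set) : Prop := forall x, A x <-> B x.

Definition MorseDecomposition (Coll : set -> Prop) : Prop :=
  (exists l : list set, forall K, Coll K -> In K l) /\
  (forall K, Coll K ->
     (forall x, K x -> InDelta x) /\ (exists x, K x) /\
     invariant K /\ isolated K /\ compact K) /\
  (forall K K', Coll K -> Coll K' -> K <> K' -> forall x, ~ (K x /\ K' x)) /\
  (forall x, InDelta x ->
     (forall y, omega_lim x y -> exists K, Coll K /\ K y) /\
     (forall y, alpha_lim x y -> exists K, Coll K /\ K y)) /\
  (forall (l : nat) (M : nat -> set) (xs : nat -> R -> V),
     (1 <= l)%nat ->
     (forall m, (m <= l)%nat -> Coll (M m)) ->
     (forall m, (1 <= m <= l)%nat ->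
        InDelta (xs m) /\ (forall K, Coll K -> ~ K (xs m)) /\
        (forall y, alpha_lim (xs m) y -> M (m - 1)%nat y) /\
        (forall y, omega_lim (xs m) y -> M m y)) ->
     ~ set_eq (M 0%nat) (M l)).

Definition finer (Coll Coll' : set -> Prop) : Prop :=
  (forall K', Coll' K' -> exists K, Coll K /\ subset K K') /\
  (exists K' K, Coll' K' /\ Coll K /\ subset K K' /\ ~ subset K' K).

Definition DeltaC (C : V -> Prop) : set :=
  fun f => InDelta f /\ forall t, C (f t).

Definition SCCcollection : set -> Prop :=
  fun K => exists C, isSCC C /\ K = DeltaC C.

End Defs.

(* Main.v *)
Require Import Defs.
From Stdlib Require Import Reals ZArith List Classical ClassicalEpsilon.
From Stdlib Require Import Reals Lra Lia ZArith List Classical ClassicalEpsilon FunctionalExtensionality PropExtensionality.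
From Coquelicot Require Import Coquelicot.
Require Import Defs.
Open Scope R_scope.

Definition fl (r : R) : Z := (up r - 1)%Z.

Lemma fl_spec r : IZR (fl r) <= r < IZR (fl r) + 1.
Proof.
  unfold fl. destruct (archimed r) as [H1 H2].
  rewrite minus_IZR. split; lra.
Qed.

Lemma fl_unique n r : IZR n <= r < IZR n + 1 -> fl r = n.
Proof.
  intros [H1 H2]. destruct (fl_spec r) as [H3 H4].
  assert (A : (fl r < n + 1)%Z) by (apply lt_IZR; rewrite plus_IZR; simpl; lra).
  assert (B : (n < fl r + 1)%Z) by (apply lt_IZR; rewrite plus_IZR; simpl; lra).
  lia.
Qed.

Lemma fl_IZR n : fl (IZR n) = n.
Proof. apply fl_unique; lra. Qed.

Lemma fl_plus r n : fl (r + IZR n) = (fl r + n)%Z.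
Proof.
  apply fl_unique. destruct (fl_spec r). rewrite plus_IZR. lra.
Qed.

Section Main.
Variables (V : Type) (E : V -> V -> Prop) (h : R).
Hypothesis Hh : 0 < h.

Definition isPath (p : Z -> V) := forall i, E (p i) (p (i + 1)%Z).
Definition rep (p : Z -> V) (t : R) : R -> V := fun s => p (fl ((s + t) / h)).
Definition shiftp (m : Z) (p : Z -> V) : Z -> V := fun i => p (m + i)%Z.

Lemma fl_div n r : IZR n * h <= r < (IZR n + 1) * h -> fl (r / h) = n.
Proof.
  intros [H1 H2]. apply fl_unique. split.
  - apply Rmult_le_reg_r with h; auto. unfold Rdiv. rewrite Rmult_assoc, Rinv_l; lra.
  - apply Rmult_lt_reg_r with h; auto. unfold Rdiv. rewrite Rmult_assoc, Rinv_l; lra.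
Qed.

Lemma fl_div_spec r : IZR (fl (r / h)) * h <= r < (IZR (fl (r/h)) + 1) * h.
Proof.
  destruct (fl_spec (r / h)) as [H1 H2]. split.
  - apply Rmult_le_compat_r with (r := h) in H1; [|lra].
    unfold Rdiv in H1. rewrite Rmult_assoc, Rinv_l in H1; lra.
  - apply Rmult_lt_compat_r with (r := h) in H2; [|lra].
    unfold Rdiv in H2. rewrite Rmult_assoc, Rinv_l in H2; lra.
Qed.

Lemma isPath_shift m p : isPath p -> isPath (shiftp m p).
Proof. intros H i. unfold shiftp. replace (m + (i + 1))%Z with ((m + i) + 1)%Z by lia. apply H. Qed.

Lemma rep_shift p t m : rep p t = rep (shiftp m p) (t - IZR m * h).
Proof.
  apply functional_extensionality. intro s. unfold rep, shiftp. f_equal.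
  replace ((s + (t - IZR m * h)) / h) with ((s + t) / h + IZR (- m)).
  - rewrite fl_plus. lia.
  - rewrite opp_IZR. field. lra.
Qed.

Lemma rep_norm (t:R) : exists m, 0 <= t - IZR m * h < h.
Proof.
  exists (fl (t / h)). destruct (fl_div_spec t). lra.
Qed.

Lemma rep_normalize p t : exists p' t', rep p t = rep p' t' /\ 0 <= t' < h /\
  (forall i, p' i = p (fl (t/h) + i)%Z).
Proof.
  exists (shiftp (fl (t/h)) p), (t - IZR (fl (t/h)) * h). split; [apply rep_shift|].
  destruct (fl_div_spec t). split; [lra|]. intro i. reflexivity.
Qed.

Lemma psi_rep a p t : psi V a (rep p t) = rep p (t + a).
Proof.
  apply functional_extensionality. intro s. unfold psi, rep. f_equal. f_equal. f_equal. ring.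
Qed.

Lemma InDelta_rep x : InDelta V E h x -> exists p t, isPath p /\ 0 <= t < h /\ x = rep p t.
Proof.
  intros [xb [tt [[H1 H2] H3]]].
  set (p := fun i => xb (IZR i * h)).
  assert (Hx : x = rep p tt).
  { apply functional_extensionality. intro s. rewrite H3. unfold rep, p.
    apply H1. apply fl_div_spec. }
  destruct (rep_normalize p tt) as [p' [t' [A [B C]]]].
  exists p', t'. split; [|split; [auto| congruence]].
  intro i. rewrite !C. unfold p. replace (fl (tt / h) + (i + 1))%Z with ((fl (tt/h) + i) + 1)%Z by lia.
  apply H2.
Qed.

Lemma rep_InDelta p t : isPath p -> InDelta V E h (rep p t).
Proof.
  intro Hp. exists (rep p 0), t. split.
  - split.
    + intros n s Hs. unfold rep. f_equal. rewrite !Rplus_0_r.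
      rewrite (fl_div n s) by auto. symmetry. apply fl_div. lra.
    + intro i. unfold rep. rewrite !Rplus_0_r.
      rewrite (fl_div i), (fl_div (i+1)); [apply Hp| |]; rewrite ?plus_IZR; simpl; lra.
  - intro s. unfold rep. rewrite Rplus_0_r. reflexivity.
Qed.

End Main.
Section Int.
Variables (V : Type) (E : V -> V -> Prop) (h : R).
Hypothesis Hh : 0 < h.
Notation rep := (rep V h).

Definition dd (u v : V) : R := if excluded_middle_informative (u = v) then 0 else 1.
Definition Jf (p q : Z -> V) (t t' : R) (i : Z) : R :=
  (h - t) * dd (p i) (q i) + (t - t') * dd (p (i+1)%Z) (q i) + t' * dd (p (i+1)%Z) (q (i+1)%Z).

Lemma dd_range u v : 0 <= dd u v <= 1.
Proof. unfold dd. destruct excluded_middle_informative; lra. Qed.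
Lemma dd_eq u : dd u u = 0.
Proof. unfold dd. destruct excluded_middle_informative; congruence. Qed.
Lemma dd_neq u v : u <> v -> dd u v = 1.
Proof. unfold dd. destruct excluded_middle_informative; congruence. Qed.
Lemma dd_sym u v : dd u v = dd v u.
Proof. unfold dd. do 2 destruct excluded_middle_informative; congruence. Qed.

Lemma delta_rep p q t t' s : delta V (rep p t) (rep q t') s = dd (p (fl ((s+t)/h))) (q (fl ((s+t')/h))).
Proof. reflexivity. Qed.

Lemma piece1 t t' i s : 0 <= t' <= t -> t <= h -> IZR i * h <= s < (IZR i + 1) * h - t ->
  fl ((s + t)/h) = i /\ fl ((s+t')/h) = i.
Proof. intros. split; apply fl_div; lra. Qed.

Lemma piece2 t t' i s : 0 <= t' <= t -> t <= h -> (IZR i + 1) * h - t <= s < (IZR i + 1) * h - t' ->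
  fl ((s + t)/h) = (i+1)%Z /\ fl ((s+t')/h) = i.
Proof. intros. split; apply fl_div; rewrite ?plus_IZR; simpl; lra. Qed.

Lemma piece3 t t' i s : 0 <= t' <= t -> t <= h -> (IZR i + 1) * h - t' <= s < (IZR i + 1) * h ->
  fl ((s + t)/h) = (i+1)%Z /\ fl ((s+t')/h) = (i+1)%Z.
Proof. intros. split; apply fl_div; rewrite ?plus_IZR; simpl; lra. Qed.

Lemma is_RInt_pc (f : R -> R) a b v : a <= b -> (forall s, a <= s < b -> f s = v) ->
  is_RInt f a b ((b - a) * v).
Proof.
  intros Hab Hf. apply is_RInt_ext with (f := fun _ => v).
  - intros x. rewrite Rmin_left, Rmax_right by auto. intros Hx. symmetry. apply Hf. lra.
  - exact (is_RInt_const a b v).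
Qed.

Lemma int_formula p q t t' i : 0 <= t' <= t -> t <= h ->
  is_RInt (delta V (rep p t) (rep q t')) (IZR i * h) ((IZR i + 1) * h) (Jf p q t t' i).
Proof.
  intros H1 H2.
  set (a := IZR i * h). set (c1 := (IZR i + 1) * h - t). set (c2 := (IZR i + 1) * h - t').
  set (b := (IZR i + 1) * h).
  assert (I1 : is_RInt (delta V (rep p t) (rep q t')) a c1 ((c1 - a) * dd (p i) (q i))).
  { apply is_RInt_pc. unfold a, c1; lra. intros s Hs. rewrite delta_rep.
    destruct (piece1 t t' i s H1 H2 Hs) as [-> ->]. reflexivity. }
  assert (I2 : is_RInt (delta V (rep p t) (rep q t')) c1 c2 ((c2 - c1) * dd (p (i+1)%Z) (q i))).
  { apply is_RInt_pc. unfold c1, c2; lra. intros s Hs. rewrite delta_rep.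
    destruct (piece2 t t' i s H1 H2 Hs) as [-> ->]. reflexivity. }
  assert (I3 : is_RInt (delta V (rep p t) (rep q t')) c2 b ((b - c2) * dd (p (i+1)%Z) (q (i+1)%Z))).
  { apply is_RInt_pc. unfold c2, b; lra. intros s Hs. rewrite delta_rep.
    destruct (piece3 t t' i s H1 H2 Hs) as [-> ->]. reflexivity. }
  pose proof (is_RInt_Chasles _ _ _ _ _ _ (is_RInt_Chasles _ _ _ _ _ _ I1 I2) I3) as I.
  replace (Jf p q t t' i) with (plus (plus ((c1 - a) * dd (p i) (q i)) ((c2 - c1) * dd (p (i + 1)%Z) (q i)))
            ((b - c2) * dd (p (i + 1)%Z) (q (i + 1)%Z))); auto.
  unfold plus; simpl. unfold Jf, a, b, c1, c2. ring.
Qed.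

End Int.
Lemma RInt_eq f a b v : is_RInt f a b v -> Defs.RInt f a b = v.
Proof.
  intro H.
  assert (ex : ex_RInt f a b) by (exists v; auto).
  pose (pr := ex_RInt_Reals_0 _ _ _ ex).
  unfold Defs.RInt.
  destruct (epsilon_spec (inhabits 0) (fun v => exists pr, RiemannInt pr = v)
     (ex_intro _ (RiemannInt pr) (ex_intro _ pr eq_refl))) as [pr' Hpr'].
  rewrite <- Hpr'. rewrite <- RInt_Reals. apply is_RInt_unique. auto.
Qed.

Lemma inv4_pos : 0 < /4. Proof. apply Rinv_0_lt_compat; lra. Qed.
Lemma inv2_pos : 0 < /2. Proof. apply Rinv_0_lt_compat; lra. Qed.
Lemma inv4_le_inv2 : /4 <= /2. Proof. apply Rinv_le_contravar; lra. Qed.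
Lemma inv2_lt_1 : /2 < 1. Proof. rewrite <- Rinv_1. apply Rinv_lt_contravar; lra. Qed.
Lemma pow4_pos n : 0 < (/4)^n. Proof. apply pow_lt, inv4_pos. Qed.
Lemma pow2_pos n : 0 < (/2)^n. Proof. apply pow_lt, inv2_pos. Qed.
Lemma pow4_le_pow2 n : (/4)^n <= (/2)^n.
Proof. apply pow_incr. pose proof inv4_pos. pose proof inv4_le_inv2. lra. Qed.

Lemma sum_half N : sum_f_R0 (fun n => (/2)^n) N = 2 - 2 * (/2)^(S N).
Proof.
  induction N; simpl. lra. rewrite IHN. simpl. lra.
Qed.

Lemma sum_half_le N : sum_f_R0 (fun n => (/2)^n) N <= 2.
Proof.
  rewrite sum_half. pose proof (pow2_pos (S N)). lra.
Qed.

Lemma sum_cmul A f N : sum_f_R0 (fun n => A * f n) N = A * sum_f_R0 f N.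
Proof. induction N; simpl. ring. rewrite IHN. ring. Qed.

Lemma sum_nonneg_growing s : (forall n, 0 <= s n) -> Un_growing (sum_f_R0 s).
Proof. intros H n. simpl. specialize (H (S n)). lra. Qed.

Lemma lim_le_bound u l B : Un_cv u l -> (forall n, u n <= B) -> l <= B.
Proof.
  intros Hu HB. destruct (Rle_dec l B) as [|Hn]; auto. exfalso.
  destruct (Hu (l - B)) as [N HN]; [lra|]. specialize (HN N (le_n N)). specialize (HB N).
  unfold R_dist in HN. apply Rabs_def2 in HN. lra.
Qed.

Lemma sum_nonneg s N : (forall n, 0 <= s n) -> 0 <= sum_f_R0 s N.
Proof. intros Hs. induction N; simpl. apply Hs. specialize (Hs (S N)). lra. Qed.

Lemma sum_single s a N : (forall n, 0 <= s n) -> (a <= N)%nat -> s a <= sum_f_R0 s N.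
Proof.
  intros Hs Ha. induction N.
  - assert (a = 0%nat) by lia. subst. simpl. lra.
  - destruct (Nat.eq_dec a (S N)) as [->|Hne].
    + simpl. pose proof (sum_nonneg s N Hs). lra.
    + simpl. specialize (IHN ltac:(lia)). specialize (Hs (S N)). lra.
Qed.


Lemma sum_mono s a b : (forall n, 0 <= s n) -> (a <= b)%nat -> sum_f_R0 s a <= sum_f_R0 s b.
Proof.
  intros Hs Hab. induction Hab. lra. simpl. specialize (Hs (S m)). lra.
Qed.

Lemma sum_two s a b N : (forall n, 0 <= s n) -> (a < b)%nat -> (b <= N)%nat ->
  s a + s b <= sum_f_R0 s N.
Proof.
  intros Hs Hab HbN. apply Rle_trans with (sum_f_R0 s b); [|apply sum_mono; auto].
  destruct b. lia. simpl. pose proof (sum_single s a b Hs ltac:(lia)). lra.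
Qed.

Section Dist.
Variables (V : Type) (E : V -> V -> Prop) (h : R).
Hypothesis Hh : 0 < h.
Notation rep := (rep V h).
Notation DI := (InDelta V E h).
Notation dist := (dist V h).
Notation Jf := (Jf V h).
Notation isPath := (isPath V E).

Definition Jx (x y : R -> V) (i : Z) := Defs.RInt (delta V x y) (IZR i * h) ((IZR i + 1) * h).

Lemma delta_sym_fun x y : delta V x y = delta V y x.
Proof.
  apply functional_extensionality. intro s. unfold delta.
  do 2 destruct excluded_middle_informative; congruence.
Qed.

Lemma Jx_sym x y i : Jx x y i = Jx y x i.
Proof. unfold Jx. rewrite delta_sym_fun. reflexivity. Qed.

Lemma J_rep1 p q t t' i : 0 <= t' <= t -> t <= h -> Jx (rep p t) (rep q t') i = Jf p q t t' i.
Proof. intros. apply RInt_eq. apply int_formula; auto. Qed.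

Lemma J_rep2 p q t t' i : 0 <= t <= t' -> t' <= h -> Jx (rep p t) (rep q t') i = Jf q p t' t i.
Proof. intros. rewrite Jx_sym. apply J_rep1; auto. Qed.

Lemma J_is x y i : DI x -> DI y -> is_RInt (delta V x y) (IZR i * h) ((IZR i + 1) * h) (Jx x y i).
Proof.
  intros Hx Hy. destruct (InDelta_rep V E h Hh x Hx) as [p [t [Hp [Ht ->]]]].
  destruct (InDelta_rep V E h Hh y Hy) as [q [t' [Hq [Ht' ->]]]].
  destruct (Rle_dec t' t).
  - rewrite J_rep1 by lra. apply int_formula; lra.
  - rewrite delta_sym_fun. rewrite Jx_sym. rewrite J_rep1 by lra. apply int_formula; lra.
Qed.

Lemma Jf_bounds p q t t' i : 0 <= t' <= t -> t <= h -> 0 <= Jf p q t t' i <= h.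
Proof.
  intros. unfold Jf.
  pose proof (dd_range V (p i) (q i)). pose proof (dd_range V (p (i+1)%Z) (q i)).
  pose proof (dd_range V (p (i+1)%Z) (q (i+1)%Z)).
  split.
  - assert (0 <= (h - t) * dd V (p i) (q i)) by (apply Rmult_le_pos; lra).
    assert (0 <= (t - t') * dd V (p (i+1)%Z) (q i)) by (apply Rmult_le_pos; lra).
    assert (0 <= t' * dd V (p (i+1)%Z) (q (i+1)%Z)) by (apply Rmult_le_pos; lra). lra.
  - assert ((h - t) * dd V (p i) (q i) <= h - t) by (rewrite <- (Rmult_1_r (h - t)) at 2; apply Rmult_le_compat_l; lra).
    assert ((t - t') * dd V (p (i+1)%Z) (q i) <= t - t') by (rewrite <- (Rmult_1_r (t - t')) at 2; apply Rmult_le_compat_l; lra).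
    assert (t' * dd V (p (i+1)%Z) (q (i+1)%Z) <= t') by (rewrite <- (Rmult_1_r t') at 2; apply Rmult_le_compat_l; lra).
    lra.
Qed.

Lemma Jx_bounds x y i : DI x -> DI y -> 0 <= Jx x y i <= h.
Proof.
  intros Hx Hy. destruct (InDelta_rep V E h Hh x Hx) as [p [t [Hp [Ht ->]]]].
  destruct (InDelta_rep V E h Hh y Hy) as [q [t' [Hq [Ht' ->]]]].
  destruct (Rle_dec t' t).
  - rewrite J_rep1 by lra. apply Jf_bounds; lra.
  - rewrite J_rep2 by lra. apply Jf_bounds; lra.
Qed.

Lemma Jx_tri x y z i : DI x -> DI y -> DI z -> Jx x z i <= Jx x y i + Jx y z i.
Proof.
  intros Hx Hy Hz.
  apply (is_RInt_le (delta V x z) (fun s => plus (delta V x y s) (delta V y z s)) (IZR i * h) ((IZR i + 1) * h)).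
  - nra.
  - apply J_is; auto.
  - apply (is_RInt_plus (delta V x y) (delta V y z)); apply J_is; auto.
  - intros s _. unfold plus; simpl. unfold delta.
    repeat destruct excluded_middle_informative; try lra. congruence.
Qed.

Lemma Jx_self x i : DI x -> Jx x x i = 0.
Proof.
  intros Hx. destruct (InDelta_rep V E h Hh x Hx) as [p [t [Hp [Ht ->]]]].
  rewrite J_rep1 by lra. unfold Jf. rewrite !dd_eq. ring.
Qed.

Lemma dterm_eq x y i : dterm V h x y i = (/4)^(Z.abs_nat i) * (/h * Jx x y i).
Proof. reflexivity. Qed.

Lemma dterm_bounds x y i : DI x -> DI y -> 0 <= dterm V h x y i <= (/4)^(Z.abs_nat i).
Proof.
  intros Hx Hy. rewrite dterm_eq. pose proof (Jx_bounds x y i Hx Hy).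
  pose proof (pow4_pos (Z.abs_nat i)).
  assert (0 <= /h * Jx x y i <= 1).
  { split. apply Rmult_le_pos; [left; apply Rinv_0_lt_compat; lra| lra].
    apply Rmult_le_reg_l with h; auto. rewrite <- Rmult_assoc, Rinv_r; lra. }
  split. apply Rmult_le_pos; lra.
  rewrite <- (Rmult_1_r ((/4)^(Z.abs_nat i))) at 2. apply Rmult_le_compat_l; lra.
Qed.

Lemma dseries_eq x y n : (n > 0)%nat -> dseries V h x y n = dterm V h x y (Z.of_nat n) + dterm V h x y (- Z.of_nat n).
Proof. intros. destruct n. lia. reflexivity. Qed.

Lemma abs_nat_of_nat n : Z.abs_nat (Z.of_nat n) = n.
Proof. apply Zabs2Nat.id. Qed.
Lemma abs_nat_opp_of_nat n : Z.abs_nat (- Z.of_nat n) = n.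
Proof. lia. Qed.

Lemma dseries_bounds x y n : DI x -> DI y -> 0 <= dseries V h x y n <= 2 * (/4)^n.
Proof.
  intros Hx Hy. destruct n.
  - simpl dseries. pose proof (dterm_bounds x y 0 Hx Hy). simpl in *. lra.
  - rewrite dseries_eq by lia.
    pose proof (dterm_bounds x y (Z.of_nat (S n)) Hx Hy). pose proof (dterm_bounds x y (- Z.of_nat (S n)) Hx Hy).
    rewrite abs_nat_of_nat in H. rewrite abs_nat_opp_of_nat in H0. lra.
Qed.

Lemma dseries_nonneg x y : DI x -> DI y -> forall n, 0 <= dseries V h x y n.
Proof. intros. apply dseries_bounds; auto. Qed.

Lemma dist_spec x y : DI x -> DI y -> infinite_sum (dseries V h x y) (dist x y).
Proof.
  intros Hx Hy.
  assert (Hg : Un_growing (sum_f_R0 (dseries V h x y))) by (apply sum_nonneg_growing, dseries_nonneg; auto).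
  assert (Hb : has_ub (sum_f_R0 (dseries V h x y))).
  { exists 4. intros r [n ->].
    apply Rle_trans with (sum_f_R0 (fun n => 2 * (/2)^n) n).
    - apply sum_Rle. intros k _. pose proof (dseries_bounds x y k Hx Hy).
      pose proof (pow4_le_pow2 k). lra.
    - rewrite sum_cmul. pose proof (sum_half_le n). change (sum_f_R0 (pow (/2)) n) with (sum_f_R0 (fun k => (/2)^k) n). lra. }
  destruct (growing_cv _ Hg Hb) as [l Hl].
  unfold Defs.dist. apply epsilon_spec. exists l. exact Hl.
Qed.

Lemma dist_ge_partial x y N : DI x -> DI y -> sum_f_R0 (dseries V h x y) N <= dist x y.
Proof.
  intros Hx Hy. apply growing_ineq. apply sum_nonneg_growing, dseries_nonneg; auto.
  apply dist_spec; auto.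
Qed.

Lemma dist_le_B x y B : DI x -> DI y -> (forall N, sum_f_R0 (dseries V h x y) N <= B) -> dist x y <= B.
Proof. intros Hx Hy HB. apply (lim_le_bound _ _ _ (dist_spec x y Hx Hy) HB). Qed.

Lemma dist_nonneg x y : DI x -> DI y -> 0 <= dist x y.
Proof.
  intros. apply Rle_trans with (sum_f_R0 (dseries V h x y) 0).
  apply sum_nonneg, dseries_nonneg; auto. apply dist_ge_partial; auto.
Qed.

Lemma dterm_sym x y i : dterm V h x y i = dterm V h y x i.
Proof. unfold dterm. rewrite delta_sym_fun. reflexivity. Qed.

Lemma dseries_sym x y n : dseries V h x y n = dseries V h y x n.
Proof.
  unfold dseries. destruct n; rewrite ?(dterm_sym x y); reflexivity.
Qed.

Lemma dist_sym x y : dist x y = dist y x.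
Proof.
  unfold Defs.dist. f_equal. apply functional_extensionality. intro r.
  f_equal. apply functional_extensionality. intro n. apply dseries_sym.
Qed.

Lemma dterm_tri x y z i : DI x -> DI y -> DI z -> dterm V h x z i <= dterm V h x y i + dterm V h y z i.
Proof.
  intros. rewrite !dterm_eq. pose proof (Jx_tri x y z i H H0 H1).
  pose proof (pow4_pos (Z.abs_nat i)).
  assert (0 < /h) by (apply Rinv_0_lt_compat; lra).
  rewrite <- Rmult_plus_distr_l. apply Rmult_le_compat_l; [lra|].
  rewrite <- Rmult_plus_distr_l. apply Rmult_le_compat_l; lra.
Qed.

Lemma dseries_tri x y z n : DI x -> DI y -> DI z -> dseries V h x z n <= dseries V h x y n + dseries V h y z n.
Proof.
  intros. destruct n.
  - simpl. apply dterm_tri; auto.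
  - rewrite !dseries_eq by lia.
    pose proof (dterm_tri x y z (Z.of_nat (S n)) H H0 H1).
    pose proof (dterm_tri x y z (- Z.of_nat (S n)) H H0 H1). lra.
Qed.

Lemma dist_tri x y z : DI x -> DI y -> DI z -> dist x z <= dist x y + dist y z.
Proof.
  intros Hx Hy Hz. apply dist_le_B; auto. intro N.
  apply Rle_trans with (sum_f_R0 (fun n => dseries V h x y n + dseries V h y z n) N).
  - apply sum_Rle. intros. apply dseries_tri; auto.
  - rewrite sum_plus. pose proof (dist_ge_partial x y N Hx Hy). pose proof (dist_ge_partial y z N Hy Hz). lra.
Qed.

Lemma dist_self x : DI x -> dist x x = 0.
Proof.
  intros Hx. apply Rle_antisym; [|apply dist_nonneg; auto].
  apply dist_le_B; auto. intro N. apply Req_le.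
  induction N.
  - simpl. rewrite dterm_eq, Jx_self; auto. ring.
  - simpl. rewrite IHN. rewrite !dterm_eq, !Jx_self; auto. ring.
Qed.

Lemma dist_ge_dterm2 x y i j : DI x -> DI y -> Z.abs_nat i <> Z.abs_nat j ->
  dterm V h x y i + dterm V h x y j <= dist x y.
Proof.
  intros Hx Hy Hij.
  assert (Hd : forall k, dterm V h x y k <= dseries V h x y (Z.abs_nat k)).
  { intro k. destruct (Z.abs_nat k) eqn:Ek.
    - assert (k = 0%Z) by lia. subst. simpl. lra.
    - rewrite dseries_eq by lia.
      assert (k = Z.of_nat (S n) \/ k = (- Z.of_nat (S n))%Z) as [->| ->] by lia.
      + pose proof (dterm_bounds x y (- Z.of_nat (S n)) Hx Hy). lra.
      + pose proof (dterm_bounds x y (Z.of_nat (S n)) Hx Hy). lra. }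
  pose proof (Hd i). pose proof (Hd j).
  destruct (Nat.lt_ge_cases (Z.abs_nat i) (Z.abs_nat j)).
  - pose proof (sum_two _ _ _ (Nat.max (Z.abs_nat i) (Z.abs_nat j)) (dseries_nonneg x y Hx Hy) H1 ltac:(lia)).
    pose proof (dist_ge_partial x y (Nat.max (Z.abs_nat i) (Z.abs_nat j)) Hx Hy). lra.
  - pose proof (sum_two _ (Z.abs_nat j) (Z.abs_nat i) (Nat.max (Z.abs_nat i) (Z.abs_nat j)) (dseries_nonneg x y Hx Hy) ltac:(lia) ltac:(lia)).
    pose proof (dist_ge_partial x y (Nat.max (Z.abs_nat i) (Z.abs_nat j)) Hx Hy). lra.
Qed.

Lemma dist_ge_dterm x y i : DI x -> DI y -> dterm V h x y i <= dist x y.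
Proof.
  intros Hx Hy. pose proof (dist_ge_dterm2 x y i (Z.of_nat (S (Z.abs_nat i))) Hx Hy).
  rewrite abs_nat_of_nat in H. pose proof (dterm_bounds x y (Z.of_nat (S (Z.abs_nat i))) Hx Hy). 
  assert (dterm V h x y i + dterm V h x y (Z.of_nat (S (Z.abs_nat i))) <= dist x y) by (apply H; lia). lra.
Qed.

Lemma dist_upper x y A : DI x -> DI y -> (forall n, dseries V h x y n <= A * (/2)^n) -> dist x y <= 2 * A.
Proof.
  intros Hx Hy HA.
  assert (0 <= A) by (pose proof (HA 0%nat); pose proof (dseries_nonneg x y Hx Hy 0); simpl in *; lra).
  apply dist_le_B; auto. intro N.
  apply Rle_trans with (sum_f_R0 (fun n => A * (/2)^n) N).
  apply sum_Rle; auto. rewrite sum_cmul. pose proof (sum_half_le N). change (sum_f_R0 (pow (/2)) N) with (sum_f_R0 (fun k => (/2)^k) N). nra.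
Qed.

End Dist.

Lemma pow_anti (a : R) k n : 0 <= a <= 1 -> (k <= n)%nat -> a ^ n <= a ^ k.
Proof.
  intros Ha Hkn. induction Hkn. lra. simpl. 
  assert (0 <= a ^ m) by (apply pow_le; lra). nra.
Qed.

Lemma pow4_eq n : (/4)^n = (/2)^n * (/2)^n.
Proof. rewrite <- Rpow_mult_distr. f_equal. field. Qed.

Lemma pow4_anti k n : (k <= n)%nat -> (/4)^n <= (/4)^k.
Proof. intros. apply pow_anti; auto. pose proof inv4_pos. split. lra. rewrite <- Rinv_1. apply Rinv_le_contravar; lra. Qed.
Lemma pow2_anti k n : (k <= n)%nat -> (/2)^n <= (/2)^k.
Proof. intros. apply pow_anti; auto. pose proof inv2_pos. pose proof inv2_lt_1. lra. Qed.

Section Metric.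
Variables (V : Type) (E : V -> V -> Prop) (h : R).
Hypothesis Hh : 0 < h.
Notation rep := (rep V h).
Notation DI := (InDelta V E h).
Notation dist := (dist V h).
Notation isPath := (isPath V E).
Notation dd := (dd V).

Lemma Jf_ge p q t t' i : 0 <= t' <= t -> t <= h ->
  (h - t) * dd (p i) (q i) <= Jf V h p q t t' i /\
  (t - t') * dd (p (i+1)%Z) (q i) <= Jf V h p q t t' i /\
  t' * dd (p (i+1)%Z) (q (i+1)%Z) <= Jf V h p q t t' i /\
  (h - t) * dd (p i) (q i) + (t - t') * dd (p (i+1)%Z) (q i) <= Jf V h p q t t' i /\
  (t - t') * dd (p (i+1)%Z) (q i) + t' * dd (p (i+1)%Z) (q (i+1)%Z) <= Jf V h p q t t' i.
Proof.
  intros.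
  pose proof (dd_range V (p i) (q i)). pose proof (dd_range V (p (i+1)%Z) (q i)).
  pose proof (dd_range V (p (i+1)%Z) (q (i+1)%Z)).
  assert (0 <= (h - t) * dd (p i) (q i)) by (apply Rmult_le_pos; lra).
  assert (0 <= (t - t') * dd (p (i+1)%Z) (q i)) by (apply Rmult_le_pos; lra).
  assert (0 <= t' * dd (p (i+1)%Z) (q (i+1)%Z)) by (apply Rmult_le_pos; lra). 
  unfold Jf. lra.
Qed.

Lemma Jx_agree p q t tau i : 0 <= t <= h -> 0 <= tau <= h -> p i = q i -> p (i+1)%Z = q (i+1)%Z ->
  Jx V h (rep p t) (rep q tau) i <= Rabs (t - tau).
Proof.
  intros Ht Htau E1 E2. destruct (Rle_dec tau t).
  - rewrite J_rep1 by lra. unfold Jf. rewrite E1, E2, !dd_eq.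
    pose proof (dd_range V (q (i+1)%Z) (q i)). rewrite Rabs_right by lra.
    assert ((t - tau) * dd (q (i+1)%Z) (q i) <= t - tau) by (rewrite <- (Rmult_1_r (t - tau)) at 2; apply Rmult_le_compat_l; lra).
    lra.
  - rewrite J_rep2 by lra. unfold Jf. rewrite E1, E2, !dd_eq.
    pose proof (dd_range V (q (i+1)%Z) (q i)). rewrite Rabs_left by lra.
    assert ((tau - t) * dd (q (i+1)%Z) (q i) <= tau - t) by (rewrite <- (Rmult_1_r (tau - t)) at 2; apply Rmult_le_compat_l; lra).
    lra.
Qed.

Lemma dist_conv p q t tau k : isPath p -> isPath q -> 0 <= t <= h -> 0 <= tau <= h ->
  (forall j, (Z.abs j <= Z.of_nat k + 1)%Z -> p j = q j) ->
  dist (rep p t) (rep q tau) <= 2 * (2 * (Rabs (t - tau) / h) + 2 * (/2)^k).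
Proof.
  intros Hp Hq Ht Htau Hag.
  pose proof (rep_InDelta V E h Hh p t Hp) as Dx. pose proof (rep_InDelta V E h Hh q tau Hq) as Dy.
  apply (dist_upper V E h Hh); auto. intro n.
  assert (Hu : 0 <= Rabs (t - tau) / h) by (apply Rmult_le_pos; [apply Rabs_pos| left; apply Rinv_0_lt_compat; lra]).
  pose proof (pow2_pos n). pose proof (pow2_pos k).
  destruct (le_lt_dec n k) as [Hnk | Hnk].
  - assert (Hd : forall i, Z.abs_nat i = n -> dterm V h (rep p t) (rep q tau) i <= (/4)^n * (Rabs (t - tau) / h)).
    { intros i Hi. rewrite dterm_eq, Hi. apply Rmult_le_compat_l. left; apply pow4_pos.
      unfold Rdiv. rewrite Rmult_comm. apply Rmult_le_compat_r. left; apply Rinv_0_lt_compat; lra.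
      apply Jx_agree; auto; apply Hag; lia. }
    assert (H4 : (/4)^n <= (/2)^n) by apply pow4_le_pow2.
    assert (dseries V h (rep p t) (rep q tau) n <= 2 * (/4)^n * (Rabs (t - tau) / h)).
    { destruct n.
      - simpl dseries. pose proof (Hd 0%Z eq_refl). simpl in *. 
        assert (0 <= Rabs (t - tau) / h) by auto. lra.
      - rewrite dseries_eq by lia. pose proof (Hd (Z.of_nat (S n)) (abs_nat_of_nat _)).
        pose proof (Hd (- Z.of_nat (S n))%Z (abs_nat_opp_of_nat _)). lra. }
    assert (2 * (/4)^n * (Rabs (t - tau) / h) <= 2 * (/2)^n * (Rabs (t - tau) / h)) by nra.
    assert (0 <= 2 * (/2)^k * (/2)^n) by nra. nra.
  - pose proof (dseries_bounds V E h Hh _ _ n Dx Dy).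
    rewrite pow4_eq in H1. pose proof (pow2_anti k n ltac:(lia)). nra.
Qed.

Lemma dist_sep p q t t' j : isPath p -> isPath q -> 0 <= t <= h -> 0 <= t' <= h ->
  q j <> p (j - 1)%Z -> q j <> p j -> q j <> p (j + 1)%Z ->
  (/4)^(S (Z.abs_nat j)) <= dist (rep p t) (rep q t').
Proof.
  intros Hp Hq Ht Ht' N1 N2 N3.
  pose proof (rep_InDelta V E h Hh p t Hp) as Dx. pose proof (rep_InDelta V E h Hh q t' Hq) as Dy.
  pose proof (dist_ge_dterm2 V E h Hh _ _ j (j - 1)%Z Dx Dy ltac:(lia)) as HD.
  rewrite !dterm_eq in HD.
  assert (HJ : h <= Jx V h (rep p t) (rep q t') j + Jx V h (rep p t) (rep q t') (j - 1)).
  { destruct (Rle_dec t' t).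
    - rewrite !J_rep1 by lra.
      destruct (Jf_ge p q t t' j ltac:(lra) ltac:(lra)) as [_ [_ [_ [A _]]]].
      destruct (Jf_ge p q t t' (j-1) ltac:(lra) ltac:(lra)) as [_ [_ [B _]]].
      replace (j - 1 + 1)%Z with j in B by lia.
      rewrite dd_neq in A by auto. rewrite (dd_neq V (p (j+1)%Z)) in A by auto.
      rewrite dd_neq in B by auto. lra.
    - rewrite !J_rep2 by lra.
      destruct (Jf_ge q p t' t j ltac:(lra) ltac:(lra)) as [A _].
      destruct (Jf_ge q p t' t (j-1) ltac:(lra) ltac:(lra)) as [_ [_ [_ [_ B]]]].
      replace (j - 1 + 1)%Z with j in B by lia.
      rewrite dd_neq in A by auto. rewrite dd_neq in B by auto. rewrite (dd_neq V (q j) (p j)) in B by auto. lra. }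
  pose proof (Jx_bounds V E h Hh _ _ j Dx Dy). pose proof (Jx_bounds V E h Hh _ _ (j-1) Dx Dy).
  pose proof (pow4_anti (Z.abs_nat j) (S (Z.abs_nat j)) ltac:(lia)).
  pose proof (pow4_anti (Z.abs_nat (j-1)) (S (Z.abs_nat j)) ltac:(lia)).
  pose proof (pow4_pos (S (Z.abs_nat j))).
  assert (Hih : 0 < /h) by (apply Rinv_0_lt_compat; lra).
  set (a := (/4)^(S (Z.abs_nat j))) in *.
  assert (a * (/h * Jx V h (rep p t) (rep q t') j) <= (/4)^(Z.abs_nat j) * (/h * Jx V h (rep p t) (rep q t') j)).
  { apply Rmult_le_compat_r; auto. apply Rmult_le_pos; lra. }
  assert (a * (/h * Jx V h (rep p t) (rep q t') (j-1)) <= (/4)^(Z.abs_nat (j-1)) * (/h * Jx V h (rep p t) (rep q t') (j-1))).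
  { apply Rmult_le_compat_r; auto. apply Rmult_le_pos; lra. }
  assert (a <= a * (/h * (Jx V h (rep p t) (rep q t') j + Jx V h (rep p t) (rep q t') (j-1)))).
  { rewrite <- (Rmult_1_r a) at 1. apply Rmult_le_compat_l. lra.
    apply Rmult_le_reg_l with h; auto. rewrite <- Rmult_assoc, Rinv_r; lra. }
  nra.
Qed.

Lemma dist_pos_aux p q t t' s : isPath p -> isPath q -> 0 <= t' <= t -> t <= h ->
  rep p t s <> rep q t' s -> 0 < dist (rep p t) (rep q t').
Proof.
  intros Hp Hq Ht Ht' Hne.
  pose proof (rep_InDelta V E h Hh p t Hp) as Dx. pose proof (rep_InDelta V E h Hh q t' Hq) as Dy.
  set (i := fl (s / h)). destruct (fl_div_spec h Hh s) as [S1 S2]. fold i in S1, S2.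
  assert (HJ : 0 < Jx V h (rep p t) (rep q t') i).
  { rewrite J_rep1 by lra. change (p (fl ((s+t)/h)) <> q (fl ((s+t')/h))) in Hne.
    destruct (Jf_ge p q t t' i ltac:(lra) ltac:(lra)) as [A [B [C _]]].
    destruct (Rlt_le_dec s ((IZR i + 1) * h - t)).
    - destruct (piece1 h Hh t t' i s ltac:(lra) ltac:(lra) ltac:(lra)) as [P1 P2].
      rewrite P1, P2 in Hne. rewrite dd_neq in A by auto. lra.
    - destruct (Rlt_le_dec s ((IZR i + 1) * h - t')).
      + destruct (piece2 h Hh t t' i s ltac:(lra) ltac:(lra) ltac:(lra)) as [P1 P2].
        rewrite P1, P2 in Hne. rewrite dd_neq in B by auto. lra.
      + destruct (piece3 h Hh t t' i s ltac:(lra) ltac:(lra) ltac:(lra)) as [P1 P2].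
        rewrite P1, P2 in Hne. rewrite dd_neq in C by auto. lra. }
  pose proof (dist_ge_dterm V E h Hh _ _ i Dx Dy). rewrite dterm_eq in H.
  assert (0 < (/4)^(Z.abs_nat i) * (/h * Jx V h (rep p t) (rep q t') i)).
  { apply Rmult_lt_0_compat. apply pow4_pos. apply Rmult_lt_0_compat; auto. apply Rinv_0_lt_compat; lra. }
  lra.
Qed.

Lemma dist_pos x y s : DI x -> DI y -> x s <> y s -> 0 < dist x y.
Proof.
  intros Hx Hy Hne.
  destruct (InDelta_rep V E h Hh x Hx) as [p [t [Hp [Ht ->]]]].
  destruct (InDelta_rep V E h Hh y Hy) as [q [t' [Hq [Ht' ->]]]].
  destruct (Rle_dec t' t).
  - apply (dist_pos_aux p q t t' s); auto; lra.
  - rewrite dist_sym. apply (dist_pos_aux q p t' t s); auto; lra.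
Qed.

End Metric.

Lemma pigeon (A : Type) (l : list A) (G : nat -> Prop) (cls : nat -> A) :
  (forall N, exists n, (N <= n)%nat /\ G n) -> (forall n, G n -> In (cls n) l) ->
  exists a, forall N, exists n, (N <= n)%nat /\ G n /\ cls n = a.
Proof.
  revert G. induction l as [|a l IH]; intros G Hinf Hin.
  - destruct (Hinf 0%nat) as [n [_ Gn]]. destruct (Hin n Gn).
  - destruct (classic (forall N, exists n, (N <= n)%nat /\ G n /\ cls n = a)) as [H|H].
    + exists a; auto.
    + apply not_all_ex_not in H. destruct H as [N0 HN0].
      destruct (IH (fun n => G n /\ (N0 <= n)%nat)) as [b Hb].
      * intro N. destruct (Hinf (Nat.max N N0)) as [n [Hn Gn]]. exists n. split; [lia| split; auto; lia].
      * intros n [Gn Hn]. destruct (Hin n Gn) as [E|E]; auto. exfalso. apply HN0. exists n. auto.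
      * exists b. intro N. destruct (Hb N) as [n [Hn [[Gn _] Hc]]]. exists n. auto.
Qed.

Section SC.
Variables (V : Type) (E : V -> V -> Prop) (h : R).
Hypothesis Hh : 0 < h.
Variable lV : list V.
Hypothesis HlV : forall v, In v lV.
Notation isPath := (isPath V E).
Variables (P : nat -> Z -> V) (T : nat -> R).
Hypothesis HP : forall n, isPath (P n).
Hypothesis HT : forall n, 0 <= T n <= h.

Definition Good (k : nat) (st : (Z -> V) * R) (n : nat) : Prop :=
  (forall j, (Z.abs j < Z.of_nat k)%Z -> P n j = fst st j) /\ snd st <= T n <= snd st + h * (/2)^k.
Definition InfG k st := forall N, exists n, (N <= n)%nat /\ Good k st n.
Definition Ext (k : nat) (st st' : (Z -> V) * R) : Prop :=
  (forall j, (Z.abs j < Z.of_nat k)%Z -> fst st' j = fst st j) /\ snd st <= snd st' /\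
  snd st' + h * (/2)^(S k) <= snd st + h * (/2)^k.

Lemma step_ex k st : InfG k st -> exists st', Ext k st st' /\ InfG (S k) st'.
Proof.
  intros HI.
  set (cls := fun n => ((P n (Z.of_nat k), P n (- Z.of_nat k)%Z),
                 if Rle_dec (T n) (snd st + h * (/2)^(S k)) then true else false)).
  destruct (pigeon _ (list_prod (list_prod lV lV) (true :: false :: nil)) (Good k st) cls HI) as [[[u1 u2] b] Hc].
  { intros n _. apply in_prod. apply in_prod; auto. unfold cls. destruct Rle_dec; simpl; auto. }
  pose proof (pow2_pos k) as Pk.
  assert (Hs : (/2)^(S k) = /2 * (/2)^k) by reflexivity.
  exists (fun j => if Z_lt_dec (Z.abs j) (Z.of_nat k) then fst st j else if Z_le_dec 0 j then u1 else u2,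
          if b then snd st else snd st + h * (/2)^(S k)).
  split.
  - split; [|split]; cbn [fst snd]; rewrite ?Hs.
    + intros j Hj. destruct Z_lt_dec; [reflexivity| lia].
    + destruct b. lra. assert (0 < h * (/2 * (/2)^k)) by (apply Rmult_lt_0_compat; auto; apply Rmult_lt_0_compat; auto; apply inv2_pos). lra.
    + destruct b; field_simplify; nra.
  - intro N. destruct (Hc N) as [n [Hn [[G1 G2] Hcl]]]. exists n. split; auto.
    unfold cls in Hcl. injection Hcl as Hu1 Hu2 Hb. split; cbn [fst snd].
    + intros j Hj. destruct Z_lt_dec; [apply G1; auto|]. destruct Z_le_dec.
      * rewrite <- Hu1. f_equal. lia.
      * rewrite <- Hu2. f_equal. lia.
    + rewrite Hs in *. destruct Rle_dec; subst b; lra.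
Qed.

Definition st0 : (Z -> V) * R := (fun _ => P 0%nat 0%Z, 0).

Lemma st0_ok : InfG 0 st0.
Proof.
  intro N. exists N. split; auto. split; simpl. intros; lia. rewrite Rmult_1_r, Rplus_0_l. apply HT.
Qed.

Definition nextst k st : (Z -> V) * R :=
  match excluded_middle_informative (exists st', Ext k st st' /\ InfG (S k) st') with
  | left H => proj1_sig (constructive_indefinite_description _ H)
  | right _ => st end.

Fixpoint stage (k : nat) : (Z -> V) * R :=
  match k with O => st0 | S k' => nextst k' (stage k') end.

Lemma nextst_spec k st : InfG k st -> Ext k st (nextst k st) /\ InfG (S k) (nextst k st).
Proof.
  intros HI. unfold nextst. destruct excluded_middle_informative as [H'|H'].
  - destruct (constructive_indefinite_description _ H') as [st' [A B]]. simpl. auto.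
  - exfalso. apply H'. apply step_ex. auto.
Qed.

Lemma stage_inf k : InfG k (stage k).
Proof.
  induction k. apply st0_ok. simpl. apply nextst_spec. auto.
Qed.

Lemma stage_ext k : Ext k (stage k) (stage (S k)).
Proof. simpl. apply nextst_spec, stage_inf. Qed.

Lemma stage_agree k m j : (k <= m)%nat -> (Z.abs j < Z.of_nat k)%Z -> fst (stage m) j = fst (stage k) j.
Proof.
  intros Hkm Hj. induction Hkm. reflexivity.
  rewrite <- IHHkm. destruct (stage_ext m) as [A _]. apply A. lia.
Qed.

Definition ak k := snd (stage k).

Lemma ak_grow : Un_growing ak.
Proof. intro k. destruct (stage_ext k) as [_ [A _]]. exact A. Qed.

Lemma ak_nest k m : (k <= m)%nat -> ak m + h * (/2)^m <= ak k + h * (/2)^k.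
Proof.
  intros Hkm. induction Hkm. lra. destruct (stage_ext m) as [_ [_ A]]. unfold ak in *. lra.
Qed.

Lemma ak_le k m : (k <= m)%nat -> ak k <= ak m.
Proof. intros Hkm. induction Hkm. lra. pose proof (ak_grow m). lra. Qed.

Lemma ak_bound k : ak k <= h.
Proof.
  pose proof (ak_nest 0 k ltac:(lia)). unfold ak at 2 in H. simpl in H.
  pose proof (pow2_pos k). assert (0 < h * (/2)^k) by (apply Rmult_lt_0_compat; auto). lra.
Qed.

Definition pick k N := epsilon (inhabits 0%nat) (fun n => (N <= n)%nat /\ Good k (stage k) n).

Lemma pick_spec k N : (N <= pick k N)%nat /\ Good k (stage k) (pick k N).
Proof.
  unfold pick. apply epsilon_spec. apply stage_inf.
Qed.

Fixpoint phi (k : nat) : nat :=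
  match k with O => pick 0 0 | S k' => pick (S k') (S (phi k')) end.

Lemma phi_good k : Good k (stage k) (phi k).
Proof. destruct k; simpl; apply pick_spec. Qed.

Lemma phi_incr k : (phi k < phi (S k))%nat.
Proof. simpl. destruct (pick_spec (S k) (S (phi k))). lia. Qed.

Definition qlim (j : Z) : V := fst (stage (S (Z.abs_nat j))) j.

Lemma phi_agree k j : (Z.abs j < Z.of_nat k)%Z -> P (phi k) j = qlim j.
Proof.
  intros Hj. destruct (phi_good k) as [G _]. rewrite G by auto. unfold qlim.
  apply stage_agree; lia.
Qed.

Lemma SC : exists (ph : nat -> nat) (q : Z -> V) (tau : R),
  (forall k, (ph k < ph (S k))%nat) /\ isPath q /\ 0 <= tau <= h /\
  (forall k j, (Z.abs j < Z.of_nat k)%Z -> P (ph k) j = q j) /\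
  (forall k, Rabs (T (ph k) - tau) <= h * (/2)^k).
Proof.
  assert (Hb : has_ub ak). { exists h. intros r [n ->]. apply ak_bound. }
  destruct (growing_cv _ ak_grow Hb) as [tau Htau].
  assert (T1 : forall k, ak k <= tau) by (apply growing_ineq; auto; apply ak_grow).
  assert (T2 : forall k, tau <= ak k + h * (/2)^k).
  { intro k. apply (lim_le_bound _ _ _ Htau). intro m. destruct (le_lt_dec k m).
    - pose proof (ak_nest k m l). pose proof (pow2_pos m). assert (0 < h * (/2)^m) by (apply Rmult_lt_0_compat; auto). lra.
    - pose proof (ak_le m k ltac:(lia)). pose proof (pow2_pos k). assert (0 < h * (/2)^k) by (apply Rmult_lt_0_compat; auto). lra. }
  exists phi, qlim, tau. split; [|split; [|split; [|split]]].
  - apply phi_incr.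
  - intro j. set (k := S (S (Z.abs_nat j + Z.abs_nat (j+1)))).
    rewrite <- (phi_agree k j) by lia. rewrite <- (phi_agree k (j+1)) by lia. apply HP.
  - split. pose proof (T1 0%nat). unfold ak in H. simpl in H. lra.
    pose proof (T2 0%nat). unfold ak in H. simpl in H. lra.
  - intros. apply phi_agree. auto.
  - intro k. destruct (phi_good k) as [_ G]. pose proof (T1 k). pose proof (T2 k). unfold ak in *.
    apply Rabs_le. lra.
Qed.

End SC.

Lemma incr_ge (ph : nat -> nat) : (forall k, (ph k < ph (S k))%nat) -> forall k, (k <= ph k)%nat.
Proof. intros H k. induction k. lia. specialize (H k). lia. Qed.

Lemma half_pow_small eps : 0 < eps -> exists N, forall n, (N <= n)%nat -> (/2)^n < eps.
Proof.
  intros He. destruct (pow_lt_1_zero (/2) ltac:(rewrite Rabs_right; [apply inv2_lt_1| left; apply inv2_pos]) eps He) as [N HN].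
  exists N. intros n Hn. specialize (HN n Hn). rewrite Rabs_right in HN; auto. left; apply pow2_pos.
Qed.

Lemma nat_large (r : R) : exists M : nat, r < INR M.
Proof.
  destruct (archimed r) as [H1 _]. exists (Z.to_nat (up r)).
  destruct (Z_lt_le_dec (up r) 0).
  - replace (Z.to_nat (up r)) with 0%nat by lia. simpl.
    assert (IZR (up r) <= -1) by (apply IZR_le; lia). lra.
  - rewrite INR_IZR_INZ, Z2Nat.id by lia. auto.
Qed.

Lemma list_choice (A B : Type) (Q : A -> B -> Prop) (L : list A) :
  (forall a, In a L -> exists b, Q a b) -> exists lb, forall a, In a L -> exists b, In b lb /\ Q a b.
Proof.
  induction L as [|a L IH]; intros H.
  - exists nil. intros a [].
  - destruct (H a (or_introl eq_refl)) as [b Hb]. destruct IH as [lb Hlb].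
    { intros a' Ha'. apply H. right; auto. }
    exists (b :: lb). intros a' [<-|Ha'].
    + exists b. split; auto. left; auto.
    + destruct (Hlb a' Ha') as [b' [Hb' Q']]. exists b'. split; auto. right; auto.
Qed.

Section SCconv.
Variables (V : Type) (E : V -> V -> Prop) (h : R).
Hypothesis Hh : 0 < h.
Variable lV : list V.
Hypothesis HlV : forall v, In v lV.
Notation isPath := (isPath V E).
Notation rep := (rep V h).
Notation dist := (dist V h).

Lemma SC_conv (P : nat -> Z -> V) (T : nat -> R) : (forall n, isPath (P n)) -> (forall n, 0 <= T n <= h) ->
  exists (ph : nat -> nat) (q : Z -> V) (tau : R),
  (forall k, (ph k < ph (S k))%nat) /\ isPath q /\ 0 <= tau <= h /\
  (forall k j, (Z.abs j < Z.of_nat k)%Z -> P (ph k) j = q j) /\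
  (forall eps, 0 < eps -> exists N, forall k, (N <= k)%nat -> dist (rep (P (ph k)) (T (ph k))) (rep q tau) < eps).
Proof.
  intros HP HT. destruct (SC V E h Hh lV HlV P T HP HT) as [ph [q [tau [H1 [H2 [H3 [H4 H5]]]]]]].
  exists ph, q, tau. repeat (split; auto).
  intros eps He. destruct (half_pow_small (eps / 8) ltac:(lra)) as [N HN].
  exists (S (S N)). intros k Hk.
  destruct k as [|[|k']]; try lia.
  pose proof (dist_conv V E h Hh (P (ph (S (S k')))) q (T (ph (S (S k')))) tau k' (HP _) H2 (HT _) H3) as D.
  assert (Ha : forall j, (Z.abs j <= Z.of_nat k' + 1)%Z -> P (ph (S (S k'))) j = q j).
  { intros j Hj. apply H4. lia. }
  specialize (D Ha). specialize (H5 (S (S k'))).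
  assert (Rabs (T (ph (S (S k'))) - tau) / h <= (/2)^(S (S k'))).
  { apply Rmult_le_reg_l with h; auto. unfold Rdiv. 
    replace (h * (Rabs (T (ph (S (S k'))) - tau) * / h)) with (Rabs (T (ph (S (S k'))) - tau)) by (field; lra). auto. }
  pose proof (pow2_anti k' (S (S k')) ltac:(lia)).
  pose proof (HN k' ltac:(lia)). lra.
Qed.

End SCconv.

Section Compact.
Variables (V : Type) (E : V -> V -> Prop) (h : R).
Hypothesis Hh : 0 < h.
Notation DI := (InDelta V E h).
Notation dist := (dist V h).
Variable K : set V.
Hypothesis HKD : forall x, K x -> DI x.

Definition SeqCompact := forall a : nat -> R -> V, (forall n, K (a n)) ->
  exists (ph : nat -> nat) y, (forall k, (ph k < ph (S k))%nat) /\ K y /\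
    forall eps, 0 < eps -> exists N, forall k, (N <= k)%nat -> dist (a (ph k)) y < eps.

Hypothesis HSC : SeqCompact.

Lemma TB d : 0 < d -> exists L, (forall w, In w L -> K w) /\ forall x, K x -> exists w, In w L /\ dist w x < d.
Proof.
  intros Hd. apply NNPP. intro H.
  assert (H' : forall L, (forall w, In w L -> K w) -> exists x, K x /\ forall w, In w L -> ~ dist w x < d).
  { intros L HL. apply NNPP. intro H2. apply H. exists L. split; auto.
    intros x Kx. apply NNPP. intro H3. apply H2. exists x. split; auto.
    intros w Hw Hlt. apply H3. exists w. auto. }
  destruct (H' nil) as [x0 [Kx0 _]]. { intros w []. }
  set (F := fun L => epsilon (inhabits x0) (fun x => K x /\ forall w, In w L -> ~ dist w x < d)).
  assert (FS : forall L, (forall w, In w L -> K w) -> K (F L) /\ forall w, In w L -> ~ dist w (F L) < d).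
  { intros L HL. unfold F. apply epsilon_spec. apply H'. auto. }
  set (Lseq := fix Lseq (n : nat) : list (R -> V) := match n with O => nil | S n' => Lseq n' ++ (F (Lseq n') :: nil) end).
  assert (LK : forall n w, In w (Lseq n) -> K w).
  { induction n; simpl; intros w Hw. destruct Hw. apply in_app_or in Hw. destruct Hw as [Hw|[<-|[]]]; auto.
    apply FS. auto. }
  set (xs := fun n => F (Lseq n)).
  assert (Xin : forall i j, (i < j)%nat -> In (xs i) (Lseq j)).
  { intros i j Hij. induction Hij; simpl; apply in_or_app; [right; left; auto| left; auto]. }
  assert (XK : forall n, K (xs n)) by (intro n; apply FS; apply LK).
  destruct (HSC xs XK) as [ph [y [Hph [Ky Hc]]]].
  destruct (Hc (d / 2) ltac:(lra)) as [N HN].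
  pose proof (HN N (le_n _)). pose proof (HN (S N) ltac:(lia)).
  assert (~ dist (xs (ph N)) (xs (ph (S N))) < d).
  { unfold xs at 2. apply FS. apply LK. apply Xin. apply Hph. }
  apply H2. pose proof (dist_tri V E h Hh (xs (ph N)) y (xs (ph (S N))) (HKD _ (XK _)) (HKD _ Ky) (HKD _ (XK _))).
  rewrite (dist_sym V h y) in H3. lra.
Qed.

Lemma LN (I : Type) (U : I -> set V) : (forall i, is_open V E h (U i)) -> (forall x, K x -> exists i, U i x) ->
  exists d, 0 < d /\ forall x, K x -> exists i, forall y, DI y -> dist x y < d -> U i y.
Proof.
  intros HU Hcov. apply NNPP. intro H.
  assert (H' : forall n : nat, exists x, K x /\ forall i, exists y, DI y /\ dist x y < / (INR n + 1) /\ ~ U i y).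
  { intro n. apply NNPP. intro H2. apply H. exists (/ (INR n + 1)). split.
    { apply Rinv_0_lt_compat. pose proof (pos_INR n). lra. }
    intros x Kx. apply NNPP. intro H3. apply H2. exists x. split; auto. intro i.
    apply NNPP. intro H4. apply H3. exists i. intros y Dy Hy. apply NNPP. intro H5. apply H4. exists y. auto. }
  set (xs := fun n => proj1_sig (constructive_indefinite_description _ (H' n))).
  assert (XS : forall n, K (xs n) /\ forall i, exists y, DI y /\ dist (xs n) y < / (INR n + 1) /\ ~ U i y).
  { intro n. unfold xs. destruct (constructive_indefinite_description _ (H' n)). auto. }
  destruct (HSC xs (fun n => proj1 (XS n))) as [ph [z [Hph [Kz Hc]]]].
  destruct (Hcov z Kz) as [i0 Hi0].
  destruct (HU i0) as [_ Ho]. destruct (Ho z Hi0) as [eps [He Hball]].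
  destruct (Hc (eps / 2) ltac:(lra)) as [N HN].
  destruct (nat_large (2 / eps)) as [M HM].
  set (k := Nat.max N M).
  pose proof (HN k ltac:(lia)) as D1.
  pose proof (incr_ge ph Hph k) as Hk.
  assert (Hinv : / (INR (ph k) + 1) < eps / 2).
  { assert (INR M <= INR (ph k)) by (apply le_INR; lia).
    assert (2 / eps < INR (ph k) + 1) by lra.
    apply Rmult_lt_reg_l with (INR (ph k) + 1). pose proof (pos_INR (ph k)); lra.
    rewrite Rinv_r by (pose proof (pos_INR (ph k)); lra).
    apply Rmult_lt_reg_l with (2 / eps). apply Rdiv_lt_0_compat; lra.
    replace (2 / eps * ((INR (ph k) + 1) * (eps / 2))) with (INR (ph k) + 1) by (field; lra). rewrite Rmult_1_r. lra. }
  destruct (proj2 (XS (ph k)) i0) as [y [Dy [Hy NU]]].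
  apply NU. apply Hball; auto.
  pose proof (dist_tri V E h Hh z (xs (ph k)) y (HKD _ Kz) (HKD _ (proj1 (XS _))) Dy).
  rewrite (dist_sym V h z (xs (ph k))) in H0. lra.
Qed.

Lemma compact_of_SC : compact V E h K.
Proof.
  intros I U HU Hcov.
  destruct (LN I U HU Hcov) as [d [Hd HLN]].
  destruct (TB d Hd) as [L [HLK HL]].
  destruct (list_choice _ _ (fun w i => forall y, DI y -> dist w y < d -> U i y) L) as [li Hli].
  { intros w Hw. apply HLN. auto. }
  exists li. intros x Kx. destruct (HL x Kx) as [w [Hw Hwx]].
  destruct (Hli w Hw) as [i [Hi Hq]]. exists i. split; auto.
Qed.

End Compact.

Section Closed.
Variables (V : Type) (E : V -> V -> Prop) (h : R).
Hypothesis Hh : 0 < h.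
Notation DI := (InDelta V E h).
Notation dist := (dist V h).

Lemma closed_of_compact (K : set V) : (forall x, K x -> DI x) -> compact V E h K ->
  forall (a : nat -> R -> V) z, DI z -> (forall n, K (a n)) ->
  (forall eps, 0 < eps -> exists N, forall k, (N <= k)%nat -> dist (a k) z < eps) -> K z.
Proof.
  intros HKD HK a z Dz Ha Hc. apply NNPP. intro Hz.
  set (U := fun (w : R -> V) (y : R -> V) => DI w /\ DI y /\ 0 < dist w z /\ dist w y < dist w z / 2).
  destruct (HK (R -> V) U) as [l Hl].
  - intro w. split. intros y [_ [Dy _]]; auto.
    intros y [Dw [Dy [Hp Hwy]]]. exists (dist w z / 2 - dist w y). split. lra.
    intros y' Dy' Hyy'. split; auto. split; auto. split; auto.
    pose proof (dist_tri V E h Hh w y y' Dw Dy Dy'). lra.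
  - intros x Kx. exists x. unfold U. split; auto. split; auto.
    assert (Hp : 0 < dist x z).
    { assert (Hne : exists s, x s <> z s).
      { apply NNPP. intro H. apply Hz. replace z with x; auto.
        apply functional_extensionality. intro s. apply NNPP. intro H2. apply H. exists s. auto. }
      destruct Hne as [s Hs]. apply (dist_pos V E h Hh x z s); auto. }
    rewrite (dist_self V E h Hh) by auto. split; auto. lra.
  - assert (Hr : forall l' : list (R -> V), exists r, 0 < r /\ forall w, In w l' -> 0 < dist w z -> r <= dist w z / 2).
    { induction l' as [|w l' [r [Hr Hr']]].
      - exists 1. split. lra. intros w [].
      - destruct (Rlt_le_dec 0 (dist w z)).
        + exists (Rmin r (dist w z / 2)). split. apply Rmin_pos; lra.
          intros w' [<-|Hw'] Hp. apply Rmin_r. pose proof (Rmin_l r (dist w z / 2)). specialize (Hr' w' Hw' Hp). lra.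
        + exists r. split; auto. intros w' [<-|Hw'] Hp. lra. auto. }
    destruct (Hr l) as [r [Hr0 Hr1]].
    destruct (Hc r Hr0) as [N HN]. specialize (HN N (le_n _)).
    destruct (Hl (a N) (Ha N)) as [w [Hw [Dw [Da [Hp Hwa]]]]].
    specialize (Hr1 w Hw Hp).
    pose proof (dist_tri V E h Hh w (a N) z Dw Da Dz). lra.
Qed.

End Closed.

Section Graph.
Variables (V : Type) (E : V -> V -> Prop).
Notation isPath := (isPath V E).
Notation pathIn := (pathIn V E).

Definition reach u v := pathIn (fun _ => True) u v.
Definition Rt u v := u = v \/ reach u v.
Definition scc u : V -> Prop := fun v => reach u v /\ reach v u.

Lemma pathIn_C C u v : pathIn C u v -> C u /\ C v.
Proof. induction 1; intuition. Qed.

Lemma pathIn_mono (C C' : V -> Prop) u v : (forall x, C x -> C' x) -> pathIn C u v -> pathIn C' u v.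
Proof.
  intros HC H. induction H. apply pathIn_edge; auto. eapply pathIn_step; eauto.
Qed.

Lemma pathIn_trans C u v w : pathIn C u v -> pathIn C v w -> pathIn C u w.
Proof.
  intros H1 H2. induction H1.
  - eapply pathIn_step; eauto.
  - eapply pathIn_step; eauto.
Qed.

Lemma reach_of C u v : pathIn C u v -> reach u v.
Proof. apply pathIn_mono. auto. Qed.

Lemma reach_trans u v w : reach u v -> reach v w -> reach u w.
Proof. apply pathIn_trans. Qed.

Lemma reach_edge u v : E u v -> reach u v.
Proof. intros. apply pathIn_edge; auto. Qed.

Lemma Rt_reach u v w : Rt u v -> reach v w -> reach u w.
Proof. intros [->|H] H2; auto. eapply reach_trans; eauto. Qed.

Lemma reach_Rt u v w : reach u v -> Rt v w -> reach u w.
Proof. intros H [<-|H2]; auto. eapply reach_trans; eauto. Qed.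

Lemma restrict (S : V -> Prop) a b : reach a b -> (forall z, Rt a z -> Rt z b -> S z) -> pathIn S a b.
Proof.
  intros H. induction H; intros HS.
  - apply pathIn_edge; auto.
    + apply HS. left; auto. right. apply reach_edge; auto.
    + apply HS. right. apply reach_edge; auto. left; auto.
  - apply pathIn_step with w; auto.
    + apply HS. left; auto. right. eapply pathIn_step; eauto.
    + apply IHpathIn. intros z Z1 Z2. apply HS; auto. right.
      apply reach_Rt with w; auto. apply reach_edge; auto.
Qed.

Lemma scc_strong u : strongly_conn V E (scc u).
Proof.
  intros v w [Huv Hvu] [Huw Hwu]. apply restrict.
  - eapply reach_trans; eauto.
  - intros z H1 H2. split.
    + apply reach_Rt with v; auto.
    + apply Rt_reach with w; auto.
Qed.

Lemma isSCC_scc u : reach u u -> isSCC V E (scc u).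
Proof.
  intros Hu. split; [|split].
  - exists u. split; auto.
  - apply scc_strong.
  - intros C' Hsub Hs v Hv. assert (C' u) by (apply Hsub; split; auto). split.
    + apply (reach_of C'). apply Hs; auto.
    + apply (reach_of C'). apply Hs; auto.
Qed.

Lemma SCC_iff C u : isSCC V E C -> C u -> forall v, C v <-> scc u v.
Proof.
  intros [_ [Hs Hm]] Hu v. split.
  - intros Hv. split; apply (reach_of C); apply Hs; auto.
  - intros Hv. assert (Huu : reach u u) by (apply (reach_of C); apply Hs; auto).
    apply (Hm (scc u)); auto.
    + intros w Hw. split; apply (reach_of C); apply Hs; auto.
    + apply scc_strong.
Qed.

Lemma SCC_eq C u : isSCC V E C -> C u -> C = scc u.
Proof.
  intros HC Hu. apply functional_extensionality. intro v.
  apply propositional_extensionality. apply SCC_iff; auto.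
Qed.

Lemma scc_reach u v w : scc u v -> reach v w -> reach w u -> scc u w.
Proof. intros [A B] H1 H2. split; auto. eapply reach_trans; eauto. Qed.

Lemma scc_same u v : scc u v -> scc u = scc v.
Proof.
  intros [A B]. apply functional_extensionality. intro w. apply propositional_extensionality.
  unfold scc. split; intros [C D]; split; eauto using reach_trans.
Qed.

Lemma path_seq p : isPath p -> forall i j, (i < j)%Z -> reach (p i) (p j).
Proof.
  intros Hp. assert (H : forall n i, reach (p i) (p (i + Z.of_nat (S n)))%Z).
  { induction n; intro i.
    - apply reach_edge. replace (i + Z.of_nat 1)%Z with (i + 1)%Z by lia. apply Hp.
    - eapply reach_trans. apply (IHn i).
      replace (i + Z.of_nat (S (S n)))%Z with ((i + Z.of_nat (S n)) + 1)%Z by lia.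
      apply reach_edge. apply Hp. }
  intros i j Hij. replace j with (i + Z.of_nat (S (Z.to_nat (j - i - 1))))%Z by lia. apply H.
Qed.

Variable lV : list V.
Hypothesis HlV : forall v, In v lV.

Definition InfF (f : Z -> V) v := forall N, exists i, (N <= i)%Z /\ f i = v.

Lemma tail_inf f : exists N0, forall i, (N0 <= i)%Z -> InfF f (f i).
Proof.
  assert (H : forall l : list V, exists N, forall v, In v l -> ~ InfF f v -> forall i, (N <= i)%Z -> f i <> v).
  { induction l as [|v l [N HN]].
    - exists 0%Z. intros v [].
    - destruct (classic (InfF f v)) as [Hv|Hv].
      + exists N. intros w [<-|Hw] Hnw; [contradiction|]. apply HN; auto.
      + assert (Hex : exists Nv, forall i, (Nv <= i)%Z -> f i <> v).
        { apply NNPP. intro H1. apply Hv. intro M. apply NNPP. intro H2. apply H1. exists M.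
          intros i Hi Hfi. apply H2. exists i. auto. }
        destruct Hex as [Nv HNv]. exists (Z.max N Nv). intros w [<-|Hw] Hnw i Hi.
        * apply HNv. lia.
        * apply HN; auto. lia. }
  destruct (H lV) as [N HN]. exists N. intros i Hi. apply NNPP. intro Hn.
  exact (HN (f i) (HlV _) Hn i Hi eq_refl).
Qed.

Lemma fut_scc p : isPath p -> exists u0 N0, reach u0 u0 /\ forall i, (N0 <= i)%Z -> scc u0 (p i).
Proof.
  intros Hp. destruct (tail_inf p) as [N0 HN0]. exists (p N0), N0.
  assert (Huu : reach (p N0) (p N0)).
  { destruct (HN0 N0 (Z.le_refl _) (N0 + 1)%Z) as [i [Hi Hpi]]. rewrite <- Hpi at 2. apply path_seq; auto; lia. }
  split; auto. intros i Hi. split.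
  - destruct (Z.eq_dec i N0) as [->|Hne]; auto. apply path_seq; auto; lia.
  - destruct (HN0 N0 (Z.le_refl _) (i + 1)%Z) as [i' [Hi' Hpi]]. rewrite <- Hpi. apply path_seq; auto; lia.
Qed.

Lemma past_scc p : isPath p -> exists u0 N0, reach u0 u0 /\ forall i, (i <= N0)%Z -> scc u0 (p i).
Proof.
  intros Hp. destruct (tail_inf (fun i => p (- i)%Z)) as [M HM]. exists (p (- M)%Z), (- M)%Z.
  assert (HP : forall i, (i <= - M)%Z -> forall N, exists i', (i' <= N)%Z /\ p i' = p i).
  { intros i Hi N. destruct (HM (- i)%Z ltac:(lia) (- N)%Z) as [i' [Hi' Hpi]].
    exists (- i')%Z. split. lia. rewrite Hpi. f_equal. lia. }
  assert (Huu : reach (p (- M)%Z) (p (- M)%Z)).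
  { destruct (HP (- M)%Z (Z.le_refl _) (- M - 1)%Z) as [i [Hi Hpi]]. rewrite <- Hpi at 1. apply path_seq; auto; lia. }
  split; auto. intros i Hi. split.
  - destruct (HP (- M)%Z (Z.le_refl _) (i - 1)%Z) as [i' [Hi' Hpi]]. rewrite <- Hpi. apply path_seq; auto; lia.
  - destruct (Z.eq_dec i (- M)%Z) as [->|Hne]; auto. apply path_seq; auto; lia.
Qed.

End Graph.

Section Chains.
Variables (V : Type) (E : V -> V -> Prop).

Inductive chain : list V -> Prop :=
| ch1 v : chain (v :: nil)
| chc u v l : E u v -> chain (v :: l) -> chain (u :: v :: l).

Lemma chain_nonnil l : chain l -> l <> nil.
Proof. destruct 1; discriminate. Qed.

Lemma chain_app l1 x l2 : chain (l1 ++ x :: nil) -> chain (x :: l2) -> chain (l1 ++ x :: l2).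
Proof.
  revert x. induction l1 as [|a l1 IH]; intros x H1 H2; simpl in *; auto.
  destruct l1 as [|b l1].
  - simpl in *. inversion H1; subst. constructor; auto.
  - simpl in *. inversion H1; subst. constructor; auto; apply (IH x); auto.
Qed.

Lemma chain_nth l d i : chain l -> (S i < length l)%nat -> E (nth i l d) (nth (S i) l d).
Proof.
  intros H. revert i. induction H; intros i Hi; simpl in *. lia.
  destruct i. auto. apply IHchain. simpl. lia.
Qed.

Lemma chain_map_seq (f : nat -> V) a L : (forall n, E (f n) (f (S n))) -> chain (map f (seq a (S L))).
Proof.
  intros Hf. revert a. induction L; intro a; simpl. constructor.
  simpl in IHL. constructor; auto; apply IHL.
Qed.

Lemma pathIn_list C u v : pathIn V E C u v -> exists l, chain (u :: l ++ v :: nil) /\ List.Forall C (u :: l ++ v :: nil).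
Proof.
  induction 1.
  - exists nil. simpl. split. constructor; auto. constructor. constructor; auto.
  - destruct IHpathIn as [l [Hc Hf]]. exists (w :: l). simpl. split. constructor; auto. constructor; auto.
Qed.

Lemma periodic C u : pathIn V E C u u -> exists p, isPath V E p /\ (forall i, C (p i)) /\ p 0%Z = u.
Proof.
  intros H. destruct (pathIn_list C u u H) as [l [Hc Hf]].
  set (cyc := u :: l).
  assert (Hc' : chain (cyc ++ u :: nil)) by exact Hc.
  assert (Hcyc : cyc = u :: l) by reflexivity. clearbody cyc.
  set (L := length cyc).
  assert (HL : (0 < Z.of_nat L)%Z) by (unfold L; rewrite Hcyc; simpl; lia).
  assert (HLd : L = length cyc) by reflexivity. clearbody L.
  exists (fun i => nth (Z.to_nat (i mod Z.of_nat L)) cyc u). split; [|split].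
  - intro i. pose proof (Z.mod_pos_bound i (Z.of_nat L) HL) as Hr.
    assert (Hlen : length (cyc ++ u :: nil) = S L) by (rewrite length_app; simpl; lia).
    pose proof (chain_nth _ u (Z.to_nat (i mod Z.of_nat L)) Hc' ltac:(lia)) as HE.
    rewrite app_nth1 in HE by lia.
    rewrite <- Z.add_mod_idemp_l by lia.
    remember (i mod Z.of_nat L)%Z as r eqn:Hrr. clear Hrr.
    destruct (Z.eq_dec (r + 1) (Z.of_nat L)) as [Heq|Hne].
    + rewrite Heq, Z_mod_same_full. simpl.
      rewrite app_nth2 in HE by lia. replace (S (Z.to_nat r) - length cyc)%nat with 0%nat in HE by lia.
      simpl in HE. rewrite Hcyc at 2. exact HE.
    + rewrite Z.mod_small by lia. rewrite app_nth1 in HE by lia.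
      replace (Z.to_nat (r + 1)) with (S (Z.to_nat r)) by lia. exact HE.
  - intro i. rewrite List.Forall_forall in Hf. destruct (Nat.lt_ge_cases (Z.to_nat (i mod Z.of_nat L)) L).
    + apply Hf. assert (In (nth (Z.to_nat (i mod Z.of_nat L)) cyc u) cyc) by (apply nth_In; lia).
      rewrite Hcyc in *. simpl in *. destruct H1; auto. right. apply in_or_app. left; auto.
    + rewrite nth_overflow by lia. apply Hf. left; auto.
  - rewrite Zmod_0_l. rewrite Hcyc. reflexivity.
Qed.

End Chains.

Section Dense.
Variables (V : Type) (E : V -> V -> Prop) (C : V -> Prop).
Hypothesis HC : isSCC V E C.
Variable u : V.
Hypothesis Hu : C u.
Variable lV : list V.
Hypothesis HlV : forall v, In v lV.
Notation chain := (chain V E).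

Definition good (w : list V) := chain w /\ List.Forall C w.

Definition conn (v w : V) : list V :=
  epsilon (inhabits nil) (fun l => chain (v :: l ++ w :: nil) /\ List.Forall C (v :: l ++ w :: nil)).

Lemma conn_spec v w : C v -> C w -> good (v :: conn v w ++ w :: nil).
Proof.
  intros Hv Hw. unfold conn. apply epsilon_spec. apply pathIn_list. destruct HC as [_ [Hs _]]. apply Hs; auto.
Qed.

Definition ext (cur w : list V) : list V :=
  match w with nil => cur | w0 :: _ => cur ++ conn (last cur u) w0 ++ w end.

Lemma good_app_Forall l1 l2 : List.Forall C (l1 ++ l2) <-> List.Forall C l1 /\ List.Forall C l2.
Proof. split. intro H. apply Forall_app in H. auto. intros [A B]. apply Forall_app. auto. Qed.

Lemma ext_spec cur w : good cur -> good w ->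
  good (ext cur w) /\ (exists r, ext cur w = cur ++ r) /\ (exists a, ext cur w = a ++ w /\ (length cur <= length a)%nat).
Proof.
  intros [Hc Hcf] [Hw Hwf]. destruct w as [|w0 w']. { exfalso. eapply chain_nonnil; eauto. }
  simpl. set (v := last cur u).
  assert (Hcur : cur = removelast cur ++ v :: nil) by (apply app_removelast_last; eapply chain_nonnil; eauto).
  assert (Hv : C v). { rewrite List.Forall_forall in Hcf. apply Hcf. rewrite Hcur. apply in_or_app. right; left; auto. }
  assert (Hw0 : C w0) by (inversion Hwf; auto).
  destruct (conn_spec v w0 Hv Hw0) as [Hcc Hccf]. set (l := conn v w0) in *.
  split; [split|split].
  - assert (A : chain (v :: l ++ w0 :: w')).
    { replace (v :: l ++ w0 :: w') with ((v :: l) ++ w0 :: w') by reflexivity. apply chain_app; auto. }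
    rewrite Hcur at 1. rewrite <- app_assoc. simpl. apply chain_app; auto. rewrite <- Hcur. auto.
  - apply good_app_Forall. split; auto. apply good_app_Forall. split; auto.
    simpl in Hccf. inversion Hccf; subst. apply good_app_Forall in H2. tauto.
  - exists (l ++ w0 :: w'). reflexivity.
  - exists (cur ++ l). split. rewrite app_assoc. reflexivity. rewrite length_app. lia.
Qed.

Fixpoint words (n : nat) : list (list V) :=
  match n with O => nil :: nil | S n' => flat_map (fun w => map (fun v => v :: w) lV) (words n') end.

Lemma words_in w : In w (words (length w)).
Proof.
  induction w as [|v w IH]; simpl. left; auto.
  apply in_flat_map. exists w. split; auto. apply (in_map (fun x => x :: w)). auto.
Qed.

Definition goodb (w : list V) : bool := if excluded_middle_informative (good w) then true else false.

Definition AllW (m : nat) := flat_map (fun n => filter goodb (words n)) (seq 0 (S m)).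

Lemma AllW_in w m : good w -> (length w <= m)%nat -> In w (AllW m).
Proof.
  intros Hg Hl. apply in_flat_map. exists (length w). split.
  - apply in_seq. lia.
  - apply filter_In. split. apply words_in. unfold goodb. destruct excluded_middle_informative; auto.
Qed.

Lemma AllW_good w m : In w (AllW m) -> good w.
Proof.
  intros H. apply in_flat_map in H. destruct H as [n [_ Hn]]. apply filter_In in Hn. destruct Hn as [_ Hb].
  unfold goodb in Hb. destruct excluded_middle_informative; auto. discriminate.
Qed.

Lemma fold_spec ws : forall cur, good cur -> (forall w, In w ws -> good w) ->
  good (fold_left ext ws cur) /\ (exists r, fold_left ext ws cur = cur ++ r) /\
  forall w, In w ws -> exists a b, fold_left ext ws cur = a ++ w ++ b /\ (length cur <= length a)%nat.
Proof.
  induction ws as [|w1 ws IH]; intros cur Hcur Hws; simpl.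
  - split; auto. split. exists nil. rewrite app_nil_r. auto. intros w [].
  - destruct (ext_spec cur w1 Hcur (Hws w1 (or_introl eq_refl))) as [G1 [[r1 R1] [a1 [A1 L1]]]].
    destruct (IH (ext cur w1) G1) as [G2 [[r2 R2] O2]]. { intros w Hw. apply Hws. right; auto. }
    split; auto. split.
    + exists (r1 ++ r2). rewrite R2, R1. rewrite app_assoc. auto.
    + intros w [<-|Hw].
      * exists a1, r2. rewrite R2, A1. rewrite app_assoc. auto.
      * destruct (O2 w Hw) as [a [b [Hab La]]]. exists a, b. split; auto. rewrite R1 in La. rewrite length_app in La. lia.
Qed.

Fixpoint Sg (m : nat) : list V :=
  match m with O => u :: nil | S m' => fold_left ext (AllW m) (Sg m') end.

Lemma good_u : good (u :: nil).
Proof. split. constructor. constructor; auto. Qed.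

Lemma Sg_good m : good (Sg m).
Proof.
  induction m. apply good_u. simpl. apply fold_spec; auto. intros w Hw. eapply AllW_good; eauto.
Qed.

Lemma Sg_step m : (exists r, Sg (S m) = Sg m ++ r) /\
  forall w, good w -> (length w <= S m)%nat -> exists a b, Sg (S m) = a ++ w ++ b /\ (length (Sg m) <= length a)%nat.
Proof.
  destruct (fold_spec (AllW (S m)) (Sg m) (Sg_good m)) as [_ [R O]].
  { intros w Hw. eapply AllW_good; eauto. }
  split; auto. intros w Hw Hl. apply O. apply AllW_in; auto.
Qed.

Lemma Sg_prefix m m' : (m <= m')%nat -> exists r, Sg m' = Sg m ++ r.
Proof.
  intros H. induction H. exists nil. rewrite app_nil_r. auto.
  destruct IHle as [r Hr]. destruct (proj1 (Sg_step m0)) as [r' Hr']. exists (r ++ r').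
  rewrite Hr', Hr, app_assoc. auto.
Qed.

Lemma Sg_len m : (S m <= length (Sg m))%nat.
Proof.
  induction m. simpl. lia.
  destruct (proj2 (Sg_step m) (u :: nil) good_u ltac:(simpl; lia)) as [a [b [Hab La]]].
  rewrite Hab. rewrite !length_app. simpl. lia.
Qed.

Definition pn (n : nat) : V := nth n (Sg (S n)) u.

Lemma nth_prefix (l l' : list V) n : (exists r, l' = l ++ r) -> (n < length l)%nat -> nth n l' u = nth n l u.
Proof. intros [r ->] Hn. apply app_nth1. auto. Qed.

Lemma pn_eq n m : (n < length (Sg m))%nat -> pn n = nth n (Sg m) u.
Proof.
  intros Hn. unfold pn. destruct (le_lt_dec (S n) m).
  - symmetry. apply nth_prefix. apply Sg_prefix. auto. pose proof (Sg_len (S n)). lia.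
  - apply nth_prefix. apply Sg_prefix. lia. auto.
Qed.

Lemma pn_E n : E (pn n) (pn (S n)).
Proof.
  pose proof (Sg_len (S (S n))).
  rewrite (pn_eq n (S (S n))) by lia. rewrite (pn_eq (S n) (S (S n))) by lia.
  apply chain_nth. apply Sg_good. lia.
Qed.

Lemma pn_C n : C (pn n).
Proof.
  unfold pn. pose proof (Sg_len (S n)). destruct (Sg_good (S n)) as [_ Hf].
  rewrite List.Forall_forall in Hf. apply Hf. apply nth_In. lia.
Qed.

Lemma pn0 : pn 0 = u.
Proof. rewrite (pn_eq 0 0). reflexivity. simpl. lia. Qed.

Lemma pn_occ w N : good w -> exists a, (N <= a)%nat /\ forall i, (i < length w)%nat -> pn (a + i) = nth i w u.
Proof.
  intros Hg. set (m := Nat.max N (length w)).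
  destruct (proj2 (Sg_step m) w Hg ltac:(unfold m; lia)) as [a [b [Hab La]]].
  pose proof (Sg_len m).
  exists (length a). split. unfold m in *. lia.
  intros i Hi. rewrite (pn_eq _ (S m)).
  - rewrite Hab. rewrite app_nth2 by lia. replace (length a + i - length a)%nat with i by lia.
    apply app_nth1. auto.
  - rewrite Hab. rewrite !length_app. lia.
Qed.

End Dense.

Lemma dense_path (V : Type) (E : V -> V -> Prop) (C : V -> Prop) (lV : list V) :
  (forall v, In v lV) -> isSCC V E C ->
  exists p, isPath V E p /\ (forall i, C (p i)) /\
    forall q, isPath V E q -> (forall i, C (q i)) -> forall (k : nat) (N : Z),
      exists n, (N <= n)%Z /\ forall j, (Z.abs j <= Z.of_nat k)%Z -> p (n + j)%Z = q j.
Proof.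
  intros HlV HC. pose proof HC as [[u Hu] [Hs _]].
  destruct (periodic V E C u (Hs u u Hu Hu)) as [per [Hper [HperC Hper0]]].
  set (pn' := pn V E C u lV).
  exists (fun i => if Z_le_dec 0 i then pn' (Z.to_nat i) else per i).
  split; [|split].
  - intro i. destruct (Z_le_dec 0 i); destruct (Z_le_dec 0 (i+1)); try lia.
    + replace (Z.to_nat (i+1)) with (S (Z.to_nat i)) by lia. apply (pn_E V E C HC u Hu lV HlV).
    + assert (i = -1)%Z by lia. subst i. simpl. unfold pn'. rewrite (pn0 V E C HC u Hu lV HlV).
      rewrite <- Hper0. apply (Hper (-1)%Z).
    + apply Hper.
  - intro i. destruct Z_le_dec. apply (pn_C V E C HC u Hu lV HlV). apply HperC.
  - intros q Hq HqC k N.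
    set (f := fun n : nat => q (Z.of_nat n - Z.of_nat k)%Z).
    set (w := map f (seq 0 (S (2 * k)))).
    assert (Hg : good V E C w).
    { split.
      - apply chain_map_seq. intro n. unfold f. replace (Z.of_nat (S n) - Z.of_nat k)%Z with ((Z.of_nat n - Z.of_nat k) + 1)%Z by lia. apply Hq.
      - apply List.Forall_forall. intros x Hx. unfold w in Hx. apply in_map_iff in Hx. destruct Hx as [n [<- _]]. apply HqC. }
    destruct (pn_occ V E C HC u Hu lV HlV w (Z.to_nat N) Hg) as [a [Ha Hocc]].
    exists (Z.of_nat a + Z.of_nat k)%Z. split. lia.
    intros j Hj. destruct Z_le_dec; [|lia].
    set (i := Z.to_nat (j + Z.of_nat k)).
    assert (Hi : (i < length w)%nat) by (unfold w, i; rewrite length_map, length_seq; lia).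
    replace (Z.to_nat (Z.of_nat a + Z.of_nat k + j)) with (a + i)%nat by (unfold i; lia).
    unfold pn'. rewrite Hocc by auto. unfold w. rewrite (nth_indep _ u (f 0%nat)) by auto.
    rewrite map_nth. rewrite seq_nth by (unfold i; lia). unfold f. f_equal. unfold i. lia.
Qed.

Section Morse.
Variables (V : Type) (E : V -> V -> Prop) (h : R).
Hypothesis Hh : 0 < h.
Variable lV : list V.
Hypothesis HlV : forall v, In v lV.
Notation DI := (InDelta V E h).
Notation dist := (dist V h).
Notation DC := (DeltaC V E h).
Notation rep := (rep V h).
Notation isPath := (isPath V E).
Notation reach := (reach V E).
Notation scc := (scc V E).

Lemma rep_at p t j : rep p t (IZR j * h - t) = p j.
Proof.
  change (p (fl ((IZR j * h - t + t) / h)) = p j). f_equal.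
  replace ((IZR j * h - t + t) / h) with (IZR j) by (field; lra). apply fl_IZR.
Qed.

Lemma DC_vals C p t : DC C (rep p t) -> forall j, C (p j).
Proof. intros [_ H] j. specialize (H (IZR j * h - t)). rewrite rep_at in H. auto. Qed.

Lemma DC_rep C p t : isPath p -> (forall j, C (p j)) -> DC C (rep p t).
Proof. intros Hp HC. split. apply rep_InDelta; auto. intro s. apply HC. Qed.

Lemma psi_DI x t : DI x -> DI (psi V t x).
Proof.
  intros Hx. destruct (InDelta_rep V E h Hh x Hx) as [p [t0 [Hp [Ht ->]]]].
  rewrite psi_rep. apply rep_InDelta; auto.
Qed.

Lemma DC_seqcompact C : SeqCompact V h (DC C).
Proof.
  intros a Ha.
  assert (H : forall n, exists pt : (Z -> V) * R, isPath (fst pt) /\ 0 <= snd pt < h /\ a n = rep (fst pt) (snd pt)).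
  { intro n. destruct (InDelta_rep V E h Hh (a n) (proj1 (Ha n))) as [p [t [A [B D]]]]. exists (p, t). auto. }
  set (Pf := fun n => proj1_sig (constructive_indefinite_description _ (H n))).
  assert (HPf : forall n, isPath (fst (Pf n)) /\ 0 <= snd (Pf n) < h /\ a n = rep (fst (Pf n)) (snd (Pf n))).
  { intro n. unfold Pf. destruct (constructive_indefinite_description _ (H n)). auto. }
  destruct (SC_conv V E h Hh lV HlV (fun n => fst (Pf n)) (fun n => snd (Pf n)))
    as [ph [q [tau [H1 [H2 [H3 [H4 H5]]]]]]].
  { intro n. apply HPf. }
  { intro n. destruct (HPf n) as [_ [A _]]. lra. }
  exists ph, (rep q tau). split; auto. split.
  - apply DC_rep; auto. intro j. rewrite <- (H4 (S (Z.abs_nat j)) j) by lia.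
    apply (DC_vals C _ (snd (Pf (ph (S (Z.abs_nat j)))))). destruct (HPf (ph (S (Z.abs_nat j)))) as [_ [_ D]].
    rewrite <- D. apply Ha.
  - intros eps He. destruct (H5 eps He) as [N HN]. exists N. intros k Hk.
    destruct (HPf (ph k)) as [_ [_ D]]. rewrite D. apply HN; auto.
Qed.

Lemma DC_compact C : compact V E h (DC C).
Proof. apply compact_of_SC; auto. intros x [Hx _]; auto. apply DC_seqcompact. Qed.

Lemma DC_invariant C : invariant V (DC C).
Proof.
  intros t x [Hx HC]. split. apply psi_DI; auto. intro s. unfold psi. apply HC.
Qed.

Lemma DC_isolated C : isolated V E h (DC C).
Proof.
  exists (fun y => DI y /\ C (y 0)). split; [|split].
  - intros x [Hx _]; auto.
  - intros x [Hx HxC]. split; auto. exists (/4). split. apply inv4_pos.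
    intros y Hy Hd. split; auto.
    destruct (InDelta_rep V E h Hh x Hx) as [p [t [Hp [Ht Hxe]]]].
    destruct (InDelta_rep V E h Hh y Hy) as [q [t' [Hq [Ht' Hye]]]].
    assert (HpC : forall j, C (p j)) by (apply (DC_vals C p t); rewrite <- Hxe; split; auto).
    rewrite Hye. change (C (q (fl ((0 + t') / h)))).
    rewrite (fl_div h Hh 0) by lra. apply NNPP. intro Hn.
    pose proof (dist_sep V E h Hh p q t t' 0 Hp Hq ltac:(lra) ltac:(lra)) as S.
    rewrite <- Hxe, <- Hye in S. simpl in S. rewrite Rmult_1_r in S.
    assert (/4 <= dist x y) by (apply S; intro Heq; apply Hn; rewrite Heq; auto). lra.
  - intros x Hx HN. split; auto. intro t. destruct (HN t) as [_ H]. unfold psi in H. rewrite Rplus_0_l in H. auto.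
Qed.

Lemma psi_rep_shift p t a m : psi V a (rep p t) = rep (shiftp V m p) (t + a - IZR m * h).
Proof. rewrite psi_rep. apply rep_shift; auto. Qed.

Lemma sep_core p m t'' q tau j (Sp : V -> Prop) : isPath p -> isPath q -> 0 <= t'' <= h -> 0 <= tau <= h ->
  Sp (p (m + j - 1)%Z) -> Sp (p (m + j)%Z) -> Sp (p (m + j + 1)%Z) -> ~ Sp (q j) ->
  (/4)^(S (Z.abs_nat j)) <= dist (rep (shiftp V m p) t'') (rep q tau).
Proof.
  intros Hp Hq Ht Htau S1 S2 S3 Sn. apply (dist_sep V E h Hh); auto. apply isPath_shift; auto.
  - unfold shiftp. intro Heq. apply Sn. rewrite Heq. replace (m + (j-1))%Z with (m + j - 1)%Z by lia. auto.
  - unfold shiftp. intro Heq. apply Sn. rewrite Heq. auto.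
  - unfold shiftp. intro Heq. apply Sn. rewrite Heq. replace (m + (j+1))%Z with (m + j + 1)%Z by lia. auto.
Qed.

Lemma omega_vals p t (Sp : V -> Prop) N0 y : isPath p -> 0 <= t < h -> (forall i, (N0 <= i)%Z -> Sp (p i)) ->
  omega_lim V E h (rep p t) y -> forall s, Sp (y s).
Proof.
  intros Hp Ht HS [Dy [tk [Htk Hc]]] s.
  destruct (InDelta_rep V E h Hh y Dy) as [q [tau [Hq [Htau ->]]]].
  apply NNPP; intro Hn. set (j := fl ((s + tau) / h)). change (~ Sp (q j)) in Hn.
  destruct (Hc ((/4)^(S (Z.abs_nat j))) (pow4_pos _)) as [N1 HN1].
  destruct (Htk (IZR (N0 - j + 1) * h - t)) as [N2 HN2].
  set (k := Nat.max N1 N2). specialize (HN1 k ltac:(lia)). specialize (HN2 k ltac:(lia)).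
  set (m := fl ((t + tk k) / h)). destruct (fl_div_spec h Hh (t + tk k)) as [F1 F2]. fold m in F1, F2.
  assert (Hm : (N0 - j + 1 <= m)%Z).
  { assert (IZR (N0 - j + 1) < IZR m + 1).
    { apply Rmult_lt_reg_r with h; auto. lra. }
    assert (N0 - j + 1 < m + 1)%Z by (apply lt_IZR; rewrite (plus_IZR m 1); simpl; lra). lia. }
  rewrite (psi_rep_shift p t (tk k) m) in HN1.
  pose proof (sep_core p m (t + tk k - IZR m * h) q tau j Sp Hp Hq ltac:(lra) ltac:(lra)
     (HS (m + j - 1)%Z ltac:(lia)) (HS (m + j)%Z ltac:(lia)) (HS (m + j + 1)%Z ltac:(lia)) Hn). lra.
Qed.

Lemma alpha_vals p t (Sp : V -> Prop) N0 y : isPath p -> 0 <= t < h -> (forall i, (i <= N0)%Z -> Sp (p i)) ->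
  alpha_lim V E h (rep p t) y -> forall s, Sp (y s).
Proof.
  intros Hp Ht HS [Dy [tk [Htk Hc]]] s.
  destruct (InDelta_rep V E h Hh y Dy) as [q [tau [Hq [Htau ->]]]].
  apply NNPP; intro Hn. set (j := fl ((s + tau) / h)). change (~ Sp (q j)) in Hn.
  destruct (Hc ((/4)^(S (Z.abs_nat j))) (pow4_pos _)) as [N1 HN1].
  destruct (Htk (IZR (N0 - j) * h - t)) as [N2 HN2].
  set (k := Nat.max N1 N2). specialize (HN1 k ltac:(lia)). specialize (HN2 k ltac:(lia)).
  set (m := fl ((t + tk k) / h)). destruct (fl_div_spec h Hh (t + tk k)) as [F1 F2]. fold m in F1, F2.
  assert (Hm : (m < N0 - j)%Z).
  { assert (IZR m < IZR (N0 - j)).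
    { apply Rmult_lt_reg_r with h; auto. lra. }
    apply lt_IZR; auto. }
  rewrite (psi_rep_shift p t (tk k) m) in HN1.
  pose proof (sep_core p m (t + tk k - IZR m * h) q tau j Sp Hp Hq ltac:(lra) ltac:(lra)
     (HS (m + j - 1)%Z ltac:(lia)) (HS (m + j)%Z ltac:(lia)) (HS (m + j + 1)%Z ltac:(lia)) Hn). lra.
Qed.

Lemma omega_ex x : DI x -> exists y, omega_lim V E h x y.
Proof.
  intros Hx. destruct (InDelta_rep V E h Hh x Hx) as [p [t [Hp [Ht ->]]]].
  destruct (SC_conv V E h Hh lV HlV (fun n => shiftp V (Z.of_nat n) p) (fun _ => t)) as [ph [q [tau [H1 [H2 [H3 [H4 H5]]]]]]].
  { intro n. apply isPath_shift; auto. } { intro n. lra. }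
  exists (rep q tau). split. apply rep_InDelta; auto.
  exists (fun k => INR (ph k) * h). split.
  - intro M. destruct (nat_large (M / h)) as [N HN]. exists N. intros k Hk.
    pose proof (incr_ge ph H1 k). assert (INR N <= INR (ph k)) by (apply le_INR; lia).
    apply Rmult_lt_reg_r with (/h). apply Rinv_0_lt_compat; auto.
    rewrite Rmult_assoc, Rinv_r by lra. unfold Rdiv in HN. lra.
  - intros eps He. destruct (H5 eps He) as [N HN]. exists N. intros k Hk.
    rewrite (psi_rep_shift p t _ (Z.of_nat (ph k))).
    replace (t + INR (ph k) * h - IZR (Z.of_nat (ph k)) * h) with t by (rewrite <- INR_IZR_INZ; ring).
    apply HN; auto.
Qed.

Lemma alpha_ex x : DI x -> exists y, alpha_lim V E h x y.
Proof.
  intros Hx. destruct (InDelta_rep V E h Hh x Hx) as [p [t [Hp [Ht ->]]]].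
  destruct (SC_conv V E h Hh lV HlV (fun n => shiftp V (- Z.of_nat n) p) (fun _ => t)) as [ph [q [tau [H1 [H2 [H3 [H4 H5]]]]]]].
  { intro n. apply isPath_shift; auto. } { intro n. lra. }
  exists (rep q tau). split. apply rep_InDelta; auto.
  exists (fun k => - INR (ph k) * h). split.
  - intro M. destruct (nat_large (- M / h)) as [N HN]. exists N. intros k Hk.
    pose proof (incr_ge ph H1 k). assert (INR N <= INR (ph k)) by (apply le_INR; lia).
    assert (- M < INR (ph k) * h).
    { apply Rmult_lt_reg_r with (/h). apply Rinv_0_lt_compat; auto.
      rewrite Rmult_assoc, Rinv_r by lra. unfold Rdiv in HN. lra. }
    lra.
  - intros eps He. destruct (H5 eps He) as [N HN]. exists N. intros k Hk.
    rewrite (psi_rep_shift p t _ (- Z.of_nat (ph k))).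
    replace (t + - INR (ph k) * h - IZR (- Z.of_nat (ph k)) * h) with t by (rewrite opp_IZR, <- INR_IZR_INZ; ring).
    apply HN; auto.
Qed.

End Morse.

Theorem mainTheorem10 (V : Type) (E : V -> V -> Prop) (h : R)
  (HV : finite_type V) (Hh : 0 < h) :
  MorseDecomposition V E h (SCCcollection V E h) /\
  forall Coll : set V -> Prop,
    MorseDecomposition V E h Coll -> ~ finer V Coll (SCCcollection V E h).
Proof.
  destruct HV as [lV HlV].
  split.
  - split; [|split; [|split; [|split]]].
    + exists (map (fun v => DeltaC V E h (scc V E v)) lV). intros K [C [HC ->]].
      pose proof HC as [[u Hu] _].
      rewrite (SCC_eq V E C u HC Hu). apply (in_map (fun v => DeltaC V E h (scc V E v))). auto.
    + intros K [C [HC ->]]. split; [intros x [Hx _]; auto|]. split.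
      * pose proof HC as [[u Hu] [Hs _]]. destruct (periodic V E C u (Hs u u Hu Hu)) as [per [Hper [HC2 _]]].
        exists (rep V h per 0). apply (DC_rep V E h Hh); auto.
      * split; [apply (DC_invariant V E h Hh)|split; [apply (DC_isolated V E h Hh)| apply (DC_compact V E h Hh lV HlV)]].
    + intros K K' [C [HC ->]] [C' [HC' ->]] Hne x [[_ H1] [_ H2]]. apply Hne.
      rewrite (SCC_eq V E C (x 0) HC (H1 0)), (SCC_eq V E C' (x 0) HC' (H2 0)). reflexivity.
    + intros x Hx. destruct (InDelta_rep V E h Hh x Hx) as [p [t [Hp [Ht ->]]]]. split.
      * intros y Hy. destruct (fut_scc V E lV HlV p Hp) as [u0 [N0 [Hu0 HN0]]].
        exists (DeltaC V E h (scc V E u0)). split.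
        { exists (scc V E u0). split; auto. apply isSCC_scc; auto. }
        split. destruct Hy; auto. apply (omega_vals V E h Hh p t _ N0 y Hp Ht HN0 Hy).
      * intros y Hy. destruct (past_scc V E lV HlV p Hp) as [u0 [N0 [Hu0 HN0]]].
        exists (DeltaC V E h (scc V E u0)). split.
        { exists (scc V E u0). split; auto. apply isSCC_scc; auto. }
        split. destruct Hy; auto. apply (alpha_vals V E h Hh p t _ N0 y Hp Ht HN0 Hy).
    + intros l M xs Hl HM Hx HsetEq.
      set (Cf := fun m => epsilon (inhabits (fun _ : V => True)) (fun C => isSCC V E C /\ M m = DeltaC V E h C)).
      assert (HCf : forall m, (m <= l)%nat -> isSCC V E (Cf m) /\ M m = DeltaC V E h (Cf m)).
      { intros m Hm. unfold Cf. apply epsilon_spec. destruct (HM m Hm) as [C [A B]]. exists C. auto. }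
      assert (Hpm : forall m, (1 <= m <= l)%nat -> exists a w, Cf (m-1)%nat a /\ Cf m w /\ reach V E a w /\ ~ reach V E w a).
      { intros m Hm. destruct (Hx m Hm) as [Dx [Hnot [Hal Hom]]].
        destruct (InDelta_rep V E h Hh (xs m) Dx) as [p [t [Hp [Ht Hxe]]]].
        destruct (past_scc V E lV HlV p Hp) as [a [Na [Ha HNa]]].
        destruct (fut_scc V E lV HlV p Hp) as [b [Nb [Hb HNb]]].
        destruct (alpha_ex V E h Hh lV HlV (xs m) Dx) as [ya Hya].
        destruct (omega_ex V E h Hh lV HlV (xs m) Dx) as [yb Hyb].
        pose proof (Hal ya Hya) as Ma. pose proof (Hom yb Hyb) as Mb.
        destruct (HCf (m-1)%nat ltac:(lia)) as [SC1 E1]. destruct (HCf m ltac:(lia)) as [SC2 E2].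
        rewrite E1 in Ma. rewrite E2 in Mb.
        rewrite Hxe in Hya, Hyb.
        assert (A1 : scc V E a (ya 0)) by (apply (alpha_vals V E h Hh p t _ Na ya Hp Ht HNa Hya)).
        assert (A2 : scc V E b (yb 0)) by (apply (omega_vals V E h Hh p t _ Nb yb Hp Ht HNb Hyb)).
        exists (ya 0), (yb 0). split. apply Ma. split. apply Mb. split.
        - set (i1 := (Z.min Na Nb - 1)%Z). set (i2 := (Z.max Na Nb + 1)%Z).
          apply reach_trans with a. apply A1.
          apply reach_trans with (p i1). apply (HNa i1). lia.
          apply reach_trans with (p i2). apply path_seq; auto. lia.
          apply reach_trans with b. apply (HNb i2). lia. apply A2.
        - intro Hback. apply (Hnot (M (m-1)%nat)). apply HM; lia. rewrite E1. rewrite Hxe.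
          apply (DC_rep V E h Hh); auto.
          intro j. rewrite (SCC_eq V E (Cf (m-1)%nat) (ya 0) SC1 (proj2 Ma 0)). split.
          + set (k1 := (Z.min j Na - 1)%Z).
            apply reach_trans with a. apply A1.
            apply reach_trans with (p k1). apply (HNa k1). lia.
            apply path_seq; auto. lia.
          + set (k2 := (Z.max j Nb + 1)%Z).
            apply reach_trans with (p k2). apply path_seq; auto. lia.
            apply reach_trans with b. apply (HNb k2). lia.
            apply reach_trans with (yb 0). apply A2. auto. }
      destruct (Hpm 1%nat ltac:(lia)) as [a1 [w1 [Ha1 [Hw1 [Hr1 Hn1]]]]].
      assert (Hch : forall d, (1 + d <= l)%nat -> exists w, Cf (1 + d)%nat w /\ Rt V E w1 w).
      { induction d; intros Hd.
        - exists w1. split; auto. left; auto.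
        - destruct IHd as [w [Hw Hrt]]. lia.
          destruct (Hpm (1 + S d)%nat ltac:(lia)) as [a' [w' [Ha' [Hw' [Hr' _]]]]].
          replace (1 + S d - 1)%nat with (1 + d)%nat in Ha' by lia.
          exists w'. split; auto. right. apply Rt_reach with w; auto.
          apply reach_trans with a'; auto.
          destruct (HCf (1 + d)%nat ltac:(lia)) as [[_ [Hs _]] _]. apply (reach_of V E (Cf (1+d)%nat)). apply Hs; auto. }
      destruct (Hch (l - 1)%nat ltac:(lia)) as [w [Hw Hrt]]. replace (1 + (l - 1))%nat with l in Hw by lia.
      destruct (HCf 0%nat ltac:(lia)) as [SC0 E0]. pose proof SC0 as [[u0 Hu0] [Hs0 _]].
      destruct (periodic V E (Cf 0%nat) u0 (Hs0 u0 u0 Hu0 Hu0)) as [per [Hper [HperC _]]].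
      assert (Hf : M 0%nat (rep V h per 0)) by (rewrite E0; apply (DC_rep V E h Hh); auto).
      apply HsetEq in Hf. destruct (HCf l ltac:(lia)) as [SCl El]. rewrite El in Hf.
      destruct Hf as [_ Hf]. specialize (Hf 0).
      assert (Hf0 : Cf 0%nat (rep V h per 0 0)) by apply HperC.
      apply Hn1. apply Rt_reach with w; auto.
      apply reach_trans with (rep V h per 0 0).
      + destruct SCl as [_ [Hsl _]]. apply (reach_of V E (Cf l)). apply Hsl; auto.
      + simpl in Ha1. apply (reach_of V E (Cf 0%nat)). apply Hs0; auto.
  - intros Coll HMD [_ [K' [K [HK' [HK [Hsub Hnsub]]]]]].
    destruct HK' as [C [HC ->]].
    destruct HMD as [_ [Hprops [Hdisj [Hlim _]]]].
    destruct (dense_path V E C lV HlV HC) as [p [Hp [HpC Hden]]].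
    set (x := rep V h p 0).
    assert (Dx : InDelta V E h x) by (apply rep_InDelta; auto).
    assert (Homg : forall z, DeltaC V E h C z -> omega_lim V E h x z).
    { intros z Hz. pose proof Hz as [Dz _].
      destruct (InDelta_rep V E h Hh z Dz) as [q [tau [Hq [Htau Hze]]]].
      assert (HqC : forall j, C (q j)) by (apply (DC_vals V E h Hh C q tau); rewrite <- Hze; auto).
      assert (Hn : forall k : nat, exists n, (Z.of_nat k <= n)%Z /\ forall j, (Z.abs j <= Z.of_nat k)%Z -> p (n + j)%Z = q j)
        by (intro k; apply (Hden q Hq HqC k (Z.of_nat k))).
      set (nf := fun k => proj1_sig (constructive_indefinite_description _ (Hn k))).
      assert (Hnf : forall k, (Z.of_nat k <= nf k)%Z /\ forall j, (Z.abs j <= Z.of_nat k)%Z -> p (nf k + j)%Z = q j).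
      { intro k. unfold nf. destruct (constructive_indefinite_description _ (Hn k)). auto. }
      split; auto. exists (fun k => IZR (nf k) * h + tau). split.
      - intro M. destruct (nat_large (M / h)) as [N HN]. exists N. intros k Hk.
        destruct (Hnf k) as [Hk1 _]. apply IZR_le in Hk1. rewrite <- INR_IZR_INZ in Hk1.
        assert (INR N <= INR k) by (apply le_INR; lia).
        assert (M < IZR (nf k) * h).
        { apply Rmult_lt_reg_r with (/h). apply Rinv_0_lt_compat; auto.
          rewrite Rmult_assoc, Rinv_r by lra. unfold Rdiv in HN. lra. }
        lra.
      - intros eps He. destruct (half_pow_small (eps / 4) ltac:(lra)) as [N HN]. exists (S N). intros k Hk.
        destruct k as [|k']. lia.
        rewrite Hze. unfold x. rewrite (psi_rep_shift V h Hh p 0 _ (nf (S k'))).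
        replace (0 + (IZR (nf (S k')) * h + tau) - IZR (nf (S k')) * h) with tau by ring.
        destruct (Hnf (S k')) as [_ Hag].
        pose proof (dist_conv V E h Hh (shiftp V (nf (S k')) p) q tau tau k' (isPath_shift V E _ _ Hp) Hq
                      ltac:(lra) ltac:(lra)) as D.
        assert (Ha : forall j, (Z.abs j <= Z.of_nat k' + 1)%Z -> shiftp V (nf (S k')) p j = q j).
        { intros j Hj. unfold shiftp. apply Hag. lia. }
        specialize (D Ha). rewrite Rminus_diag, Rabs_R0 in D. unfold Rdiv in D. rewrite Rmult_0_l in D.
        specialize (HN k' ltac:(lia)). lra. }
    assert (Hxx : omega_lim V E h x x) by (apply Homg; apply (DC_rep V E h Hh); auto).
    destruct (proj1 (Hlim x Dx) x Hxx) as [K0 [HK0 K0x]].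
    destruct (Hprops K0 HK0) as [K0D [_ [K0inv [_ K0c]]]].
    assert (Hall : forall z, DeltaC V E h C z -> K0 z).
    { intros z Hz. destruct (Homg z Hz) as [Dz [tk [_ Hc]]].
      apply (closed_of_compact V E h Hh K0 K0D K0c (fun k => psi V (tk k) x) z Dz); auto.
      all: try (intro n; apply K0inv; auto). }
    destruct (Hprops K HK) as [_ [[k0 Hk0] _]].
    destruct (classic (K = K0)) as [->|Hne].
    + apply Hnsub. intros z Hz. apply Hall; auto.
    + apply (Hdisj K K0 HK HK0 Hne k0). split; auto; apply Hall; apply Hsub; auto.
Qed.
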